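(* Let $F|R$ be an extension of ordered fields with canonical valuation $v$ and assume that $vR$ is a convex subgroup of $vF$. Then the injective maps $\tilde\iota:\mathcal C(R)\to\mathcal C(F)$ that are continuous with respect to the full topologies and compatible with restriction are exactly the maps constructed as follows: for a non-ball cut $C=(D,E)$ of $R$, $\tilde\iota(C)$ is one of $D^{+}_F$ or $E^{-}_F$; if $C$ is the lower edge $B_0^-$ (resp. upper edge $B_0^+$) in $R$ of a ball $B_0\neq R$ with ball complement $(D,E)$ in $R$, then $\tilde\iota(C)=D^{+}_F$ (resp. $E^{-}_F$); and $\tilde\iota((\emptyset,R))=R^{-}_F$, $\tilde\iota((R,\emptyset))=R^{+}_F$.
   Context: The canonical valuation $v$ of an ordered field has as valuation ring the convex hull of $\mathbb Z$. For an ordered field $K$, a cut is a pair $(D,E)$ with $D<E$, $D\cup E=K$; $\mathcal C(K)$ is the set of cuts, ordered by $(D_1,E_1)<(D_2,E_2)$ iff $D_1\subsetneq D_2$. For nonempty $A\subseteq K$, $A^+=(D,K\setminus D)$ with $D$ the smallest initial segment containing $A$, and $A^-=(K\setminus E,E)$ with $E$ the smallest final segment containing $A$; for $A\subseteq R$, $A^{\pm}_F$ are these cuts taken in $F$. For $a\in K$ and a final segment $S$ of $vK$ (possibly empty), $B_S(a,K)=\{b\in K\mid v(a-b)\in S\cup\{\infty\}\}$ is a ball; a ball complement of a ball $B$ is $(D,E)$ with $D<B<E$, $D\cup B\cup E=K$. A cut is a ball cut if it is $B^+$ (upper edge) or $B^-$ (lower edge) of a ball $B$, otherwise a non-ball cut.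 Two cuts are equivalent if equal or the lower and upper edge of the same ball; a subset of $\mathcal C(K)$ is full if closed under equivalence. The interval topology on $\mathcal C(K)$ has basic open sets $(C_1,C_2)$, $(C_1,(K,\emptyset)]$, $[(\emptyset,K),C_2)$; the full topology consists of all full sets open in the interval topology. Restriction of a cut $(D',E')$ of $F$ to $R$ is $(D'\cap R,E'\cap R)$; $\tilde\iota$ is compatible with restriction if the restriction of $\tilde\iota(C)$ is $C$ for all $C$. *)

(* Defs.v *)
From HB Require Import structures.
From mathcomp Require Import all_boot all_order all_algebra.
From mathcomp Require Import boolp classical_sets.
Set Implicit Arguments. Unset Strict Implicit. Unset Printing Implicit Defensive.
Import Order.TTheory GRing.Theory Num.Theory.
Local Open Scope ring_scope.
Local Open Scope classical_set_scope.

Section OrderedFieldDefs.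
Variable K : realFieldType.

(* Canonical valuation v of K, through the order it induces:
   vle x y  <->  v x <= v y  (valuation ring = convex hull of Z).
   Includes 0: v 0 = oo. *)
Definition vle (x y : K) : Prop := exists n : nat, `|y| <= n%:R * `|x|.
Definition veq (x y : K) : Prop := vle x y /\ vle y x.

(* A cut (D, E) with D < E, D \cup E = K is determined by its lower part D,
   an initial segment of K; E is the complement of D. *)
Record cut := Cut { cutD : set K ;
                    cutP : forall x y, cutD x -> y <= x -> cutD y }.

Definition cut_lt (C1 C2 : cut) : Prop :=
  cutD C1 `<=` cutD C2 /\ cutD C1 <> cutD C2.

(* S is (the preimage under v of) a final segment of vK (possibly empty):
   a set of nonzero elements, upward closed for v. *)
Definition vfinal (S : set K) : Prop :=
  (forall x, S x -> x != 0) /\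
  (forall x y, S x -> y != 0 -> vle x y -> S y).

(* B_S(a,K) = { b | v(a-b) \in S \cup {oo} } *)
Definition ball_at (S : set K) (a : K) : set K :=
  [set b | b = a \/ S (a - b)].

Definition is_ball (B : set K) : Prop :=
  exists S a, vfinal S /\ B = ball_at S a.

(* Lower part of A^+ : smallest initial segment containing A *)
Definition upD (A : set K) : set K := [set x | exists2 a, A a & x <= a].
(* Lower part of A^- : complement of the smallest final segment containing A *)
Definition lowD (A : set K) : set K := [set x | forall a, A a -> x < a].

Definition ball_cut (C : cut) : Prop :=
  exists B, is_ball B /\ (cutD C = upD B \/ cutD C = lowD B).

Definition ball_complement (B D E : set K) : Prop :=
  [/\ (forall d b, D d -> B b -> d < b),
      (forall b e, B b -> E e -> b < e) &
      (forall x, D x \/ B x \/ E x)].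

Definition cut_equiv (C1 C2 : cut) : Prop :=
  C1 = C2 \/
  exists B, is_ball B /\
    ((cutD C1 = lowD B /\ cutD C2 = upD B) \/
     (cutD C1 = upD B /\ cutD C2 = lowD B)).

Definition full (U : set cut) : Prop :=
  forall C1 C2, U C1 -> cut_equiv C1 C2 -> U C2.

Definition basic_open (U : set cut) : Prop :=
  (exists C1 C2, U = [set C | cut_lt C1 C /\ cut_lt C C2]) \/
  (exists C1, U = [set C | cut_lt C1 C]) \/
  (exists C2, U = [set C | cut_lt C C2]).

Definition interval_open (U : set cut) : Prop :=
  forall C, U C -> exists V, [/\ basic_open V, V C & V `<=` U].

Definition full_open (U : set cut) : Prop := full U /\ interval_open U.

End OrderedFieldDefs.

Section ExtensionDefs.
Variables (R F : realFieldType) (i : R -> F).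

(* lower part of A^+_F, for A a subset of R *)
Definition ext_upD (A : set R) : set F := [set y | exists2 a, A a & y <= i a].
(* lower part of A^-_F, for A a subset of R *)
Definition ext_lowD (A : set R) : set F := [set y | forall a, A a -> y < i a].

Definition restrict (C : cut F) : set R := [set r | cutD C (i r)].

Definition full_continuous (f : cut R -> cut F) : Prop :=
  forall U : set (cut F), full_open U -> full_open (f @^-1` U).
End ExtensionDefs.

(* Main.v *)
Require Import Defs.
From HB Require Import structures.
From mathcomp Require Import all_boot all_order all_algebra.
From mathcomp Require Import boolp classical_sets.
From mathcomp Require Import ring lra.
Import Order.TTheory GRing.Theory Num.Theory.
Local Open Scope ring_scope.
Local Open Scope classical_set_scope.
Set Implicit Arguments. Unset Strict Implicit. Unset Printing Implicit Defensive.


Section Generic.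
Variable K : realFieldType.
Implicit Types (x y z a b c : K) (S T : set K).

Lemma normP x : (0 <= x /\ `|x| = x) \/ (x < 0 /\ `|x| = - x).
Proof.
case: (lerP 0 x) => h; [left; split=> //; exact: ger0_norm|right; split=> //; exact: ltr0_norm].
Qed.

Lemma vle_le x y : `|y| <= `|x| -> vle x y.
Proof. by move=> h; exists 1%N; rewrite mul1r. Qed.

Lemma vle_refl x : vle x x. Proof. exact: vle_le. Qed.

Lemma vle_trans x y z : vle x y -> vle y z -> vle x z.
Proof.
move=> [n hn] [m hm]; exists (m * n)%N; rewrite natrM -mulrA.
apply: (le_trans hm); apply: ler_wpM2l => //; exact: ler0n.
Qed.

Lemma vle_total x y : vle x y \/ vle y x.
Proof.
case: (lerP `|y| `|x|) => h; [left; exact: vle_le|right; apply: vle_le; exact: ltW].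
Qed.

Lemma vle0 x : vle x 0. Proof. by exists 0%N; rewrite normr0 mul0r. Qed.

Lemma vle0l y : vle 0 y -> y = 0.
Proof. by move=> [n]; rewrite normr0 mulr0 normr_le0 => /eqP. Qed.

Lemma vleNl x y : vle (- x) y <-> vle x y.
Proof. by split=> -[n h]; exists n; move: h; rewrite normrN. Qed.

Lemma vleNr x y : vle x (- y) <-> vle x y.
Proof. by split=> -[n h]; exists n; move: h; rewrite normrN. Qed.

Lemma vle_add x y : vle x (x + y) \/ vle y (x + y).
Proof.
case: (lerP `|y| `|x|) => h.
- left; exists 2%N; apply: (le_trans (ler_normD _ _)); rewrite mulr2n mulrDl mul1r.
  by apply: lerD.
- right; exists 2%N; apply: (le_trans (ler_normD _ _)); rewrite mulr2n mulrDl mul1r.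
  by apply: lerD => //; exact: ltW.
Qed.

Lemma vle_nat x y (n : nat) : `|y| <= n%:R * `|x| -> vle x y.
Proof. by move=> h; exists n. Qed.

Definition inS0 (S : set K) x := x = 0 \/ S x.

Lemma inS0_up S x y : vfinal S -> inS0 S x -> vle x y -> inS0 S y.
Proof.
move=> [hS0 hSu] [->|hx] hxy; first by left; apply: vle0l.
case: (eqVneq y 0) => [->|hy]; [by left|right; exact: hSu hx hy hxy].
Qed.

Lemma inS0_add S x y : vfinal S -> inS0 S x -> inS0 S y -> inS0 S (x + y).
Proof.
move=> hS hx hy; case: (vle_add x y) => h; [exact: inS0_up hx h|].
exact: inS0_up hy h.
Qed.

Lemma inS0_opp S x : vfinal S -> inS0 S x -> inS0 S (- x).
Proof. by move=> hS hx; apply: inS0_up hx _ => //; apply/vleNr; exact: vle_refl. Qed.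

Lemma ball_atE S a b : ball_at S a b <-> inS0 S (a - b).
Proof.
rewrite /ball_at /inS0 /=; split.
- by case=> [->|h]; [left; rewrite subrr|right].
- by case=> [h|h]; [left; apply/eqP; rewrite eq_sym -subr_eq0 h|right].
Qed.

Lemma ball_center S a : ball_at S a a.
Proof. by left. Qed.

Lemma ball_convex S a b1 b2 x : vfinal S -> ball_at S a b1 -> ball_at S a b2 ->
  b1 <= x -> x <= b2 -> ball_at S a x.
Proof.
move=> hS; rewrite !ball_atE => h1 h2 hb1 hb2.
have : `|a - x| <= `|a - b1| \/ `|a - x| <= `|a - b2|.
  case: (normP (a - x)) => -[? ->]; case: (normP (a - b1)) => -[? ->];
  case: (normP (a - b2)) => -[? ->]; (left; lra) || (right; lra).
by case=> h; [apply: inS0_up h1 _|apply: inS0_up h2 _] => //; apply: vle_le.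
Qed.

Lemma ball_recenter S a c : vfinal S -> ball_at S a c -> ball_at S a = ball_at S c.
Proof.
move=> hS hc; apply: funext => x; apply: propext; rewrite !ball_atE; move: hc.
rewrite ball_atE => hc; split=> h.
- have -> : c - x = - (a - c) + (a - x) by ring.
  by apply: inS0_add => //; apply: inS0_opp.
- have -> : a - x = (a - c) + (c - x) by ring.
  exact: inS0_add.
Qed.

Lemma ball_nested S T a b c : vfinal S -> vfinal T -> ball_at S a c -> ball_at T b c ->
  ball_at S a `<=` ball_at T b \/ ball_at T b `<=` ball_at S a.
Proof.
move=> hS hT hSc hTc; rewrite (ball_recenter hS hSc) (ball_recenter hT hTc).
case: (pselect (exists x, S x /\ ~ T x)) => [[x0 [Sx0 nTx0]]|hne].
- right=> z; rewrite !ball_atE => -[->|Tz]; [by left|right].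
  case: (vle_total (c - z) x0) => h.
  + exfalso; apply: nTx0; exact: hT.2 Tz (hS.1 _ Sx0) h.
  + apply: hS.2 Sx0 (hT.1 _ Tz) h.
- left=> z; rewrite !ball_atE => -[->|Sz]; [by left|right].
  apply: contrapT => nT; apply: hne; by exists (c - z).
Qed.

Lemma ball_proper S T a c x : vfinal S -> vfinal T -> ball_at T c `<=` ball_at S a ->
  ball_at S a x -> ~ ball_at T c x ->
  exists p q, [/\ ball_at S a p, ball_at S a q,
    (forall z, ball_at T c z -> p < z) & (forall z, ball_at T c z -> z < q)].
Proof.
move=> hS hT hsub hx hnx.
have hSc : ball_at S a c by apply: hsub; exact: ball_center.
move: hx; rewrite (ball_recenter hS hSc) => hx.
have hx' := hx; rewrite ball_atE in hx'.
have hnx' : ~ inS0 T (c - x) by move=> h; apply: hnx; rewrite ball_atE.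
have hd : inS0 S `|c - x| by apply: inS0_up hx' _ => //; apply: vle_le; rewrite normr_id.
have hnd : ~ inS0 T `|c - x|.
  by move=> h; apply: hnx'; apply: inS0_up h _ => //; apply: vle_le; rewrite normr_id.
have hd0 : 0 < `|c - x|.
  rewrite normr_gt0; apply/eqP => h; apply: hnx'; by left.
exists (c - `|c - x|), (c + `|c - x|); split.
- by rewrite ball_atE; have -> : c - (c - `|c - x|) = `|c - x| by ring.
- rewrite ball_atE; have -> : c - (c + `|c - x|) = - `|c - x| by ring.
  exact: inS0_opp.
- move=> z hz; rewrite ltNge; apply/negP => hzp; apply: hnd.
  have : ball_at T c (c - `|c - x|).
    apply: (ball_convex hT hz (ball_center _ _) hzp); lra.
  by rewrite ball_atE; have -> : c - (c - `|c - x|) = `|c - x| by ring.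
- move=> z hz; rewrite ltNge; apply/negP => hzp; apply: hnd.
  have : ball_at T c (c + `|c - x|).
    apply: (ball_convex hT (ball_center _ _) hz _ hzp); lra.
  rewrite ball_atE; have -> : c - (c + `|c - x|) = - `|c - x| by ring.
  move=> h; have := inS0_opp hT h; by rewrite opprK.
Qed.

Lemma convex_sep (X Y : set K) z1 z2 :
  (forall u v w, X u -> X w -> u <= v -> v <= w -> X v) ->
  (forall u v w, Y u -> Y w -> u <= v -> v <= w -> Y v) ->
  (forall c, X c -> Y c -> False) -> X z1 -> Y z2 -> z1 < z2 ->
  forall x y, X x -> Y y -> x < y.
Proof.
move=> cX cY dis h1 h2 h12 x y hx hy; rewrite ltNge; apply/negP => hyx.
case: (lerP x z2) => hxz2.
  by apply: (dis x) => //; apply: (cY y x z2).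
case: (lerP z1 y) => hz1y.
  by apply: (dis y) => //; apply: (cX z1 y x).
apply: (dis z1) => //; apply: (cY y z1 z2) => //; exact: ltW.
Qed.

Lemma ball_sep S T a b z1 z2 : vfinal S -> vfinal T ->
  (forall c, ball_at S a c -> ball_at T b c -> False) ->
  ball_at S a z1 -> ball_at T b z2 -> z1 < z2 ->
  exists m, (forall z, ball_at S a z -> z < m) /\ (forall z, ball_at T b z -> m < z).
Proof.
move=> hS hT dis h1 h2 h12.
have sep := convex_sep (fun u v w hu hw => ball_convex hS hu hw)
  (fun u v w hu hw => ball_convex hT hu hw) dis h1 h2 h12.
have hab : a < b by apply: sep; exact: ball_center.
set m := (a + b) / 2.
have hm1 : ~ ball_at S a m.
  rewrite ball_atE => h; apply: (dis b _ (ball_center _ _)); rewrite ball_atE.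
  apply: inS0_up h _ => //; exists 2%N; rewrite /m.
  have -> : a - (a + b) / 2 = (a - b) / 2 by field.
  rewrite normrM [`|2^-1|]ger0_norm ?invr_ge0 //; set u := `|_|.
  have : 0 <= u by apply: normr_ge0.
  move=> hu; lra.
have hm2 : ~ ball_at T b m.
  rewrite ball_atE => h; apply: (dis a (ball_center _ _)); rewrite ball_atE.
  apply: inS0_up h _ => //; exists 2%N; rewrite /m.
  have -> : b - (a + b) / 2 = (b - a) / 2 by field.
  rewrite normrM [`|2^-1|]ger0_norm ?invr_ge0 //; set u := `|_|.
  have : 0 <= u by apply: normr_ge0.
  move=> hu; lra.
exists m; split=> z hz; rewrite ltNge; apply/negP => hzm.
- apply: hm1; apply: (ball_convex hS (ball_center _ _) hz) => //; rewrite /m; lra.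
- apply: hm2; apply: (ball_convex hT hz (ball_center _ _)) => //; rewrite /m; lra.
Qed.

End Generic.


Section Cuts.
Variable K : realFieldType.
Implicit Types (x y z a b c e : K) (S T : set K) (X Y Z C : cut K) (A B : set K).

Lemma exNP (P : K -> Prop) (Q : K -> Prop) : ~ (forall x, P x -> Q x) -> exists x, P x /\ ~ Q x.
Proof.
move=> h; apply: contrapT => hn; apply: h => x hx; apply: contrapT => hq; apply: hn; by exists x.
Qed.

Lemma cut_total X Y : cutD X `<=` cutD Y \/ cutD Y `<=` cutD X.
Proof.
case: (pselect (cutD X `<=` cutD Y)) => [h|h]; [by left|right].
have [x [hx hnx]] := exNP h.
move=> y hy; case: (lerP y x) => hyx; first exact: cutP hx hyx.
exfalso; apply: hnx; apply: cutP hy _; exact: ltW.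
Qed.

Lemma cut_eq X Y : cutD X = cutD Y -> X = Y.
Proof.
case: X => DX PX; case: Y => DY PY /= h; subst DY.
by rewrite (Prop_irrelevance PX PY).
Qed.

Lemma cut_ltI X Y y : cutD X `<=` cutD Y -> cutD Y y -> ~ cutD X y -> cut_lt X Y.
Proof. by move=> h hy hny; split=> // he; apply: hny; rewrite he. Qed.

Lemma cut_ltE X Y : cut_lt X Y -> exists y, cutD Y y /\ ~ cutD X y.
Proof.
move=> [h hne]; apply: exNP => h2; apply: hne; apply/seteqP; split=> //.
Qed.

Lemma cut_lt_sub X Y : cut_lt X Y -> cutD X `<=` cutD Y.
Proof. by case. Qed.

Lemma cut_lt_le X Y Z : cut_lt X Y -> cutD Y `<=` cutD Z -> cut_lt X Z.
Proof.
move=> hXY hYZ; have [y [hy hny]] := cut_ltE hXY.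
apply: (cut_ltI (y := y)) => //; [exact: subset_trans (cut_lt_sub hXY) hYZ|exact: hYZ].
Qed.

Lemma cut_le_lt X Y Z : cutD X `<=` cutD Y -> cut_lt Y Z -> cut_lt X Z.
Proof.
move=> hXY hYZ; have [y [hy hny]] := cut_ltE hYZ.
apply: (cut_ltI (y := y)) => //; [exact: subset_trans hXY (cut_lt_sub hYZ)|].
by move=> h; apply: hny; apply: hXY.
Qed.

Lemma cut_lt_irr X : ~ cut_lt X X.
Proof. by case. Qed.

Lemma cut_le_eq_or_lt X Y : cutD X `<=` cutD Y -> X = Y \/ cut_lt X Y.
Proof.
move=> h; case: (pselect (cutD X = cutD Y)) => [e|ne]; [left; exact: cut_eq|right; by split].
Qed.

Lemma cut_trich X Y : cut_lt X Y \/ X = Y \/ cut_lt Y X.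
Proof.
case: (cut_total X Y) => h; case: (cut_le_eq_or_lt h) => [->|]; auto.
Qed.

Definition ltset e : set K := [set x | x < e].
Definition leset e : set K := [set x | x <= e].
Lemma ltset_dc e x y : ltset e x -> y <= x -> ltset e y.
Proof. by rewrite /ltset /= => h1 h2; exact: le_lt_trans h2 h1. Qed.
Lemma leset_dc e x y : leset e x -> y <= x -> leset e y.
Proof. by rewrite /leset /= => h1 h2; exact: le_trans h2 h1. Qed.
Definition cltc e := @Cut K (ltset e) (@ltset_dc e).
Definition clec e := @Cut K (leset e) (@leset_dc e).
Lemma lowD_dc A x y : lowD A x -> y <= x -> lowD A y.
Proof. by move=> h hyx a ha; exact: le_lt_trans hyx (h a ha). Qed.
Lemma upD_dc A x y : upD A x -> y <= x -> upD A y.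
Proof. by move=> [a ha hxa] hyx; exists a => //; exact: le_trans hyx hxa. Qed.
Definition clow A := @Cut K (lowD A) (@lowD_dc A).
Definition cup A := @Cut K (upD A) (@upD_dc A).
Lemma set0_dc x y : (set0 : set K) x -> y <= x -> (set0 : set K) y.
Proof. by []. Qed.
Lemma setT_dc x y : (setT : set K) x -> y <= x -> (setT : set K) y.
Proof. by []. Qed.
Definition cbot := @Cut K set0 set0_dc.
Definition ctop := @Cut K setT setT_dc.

Lemma cut_le_witness C x : ~ cutD C x -> cutD C `<=` ltset x.
Proof.
move=> hn y hy; rewrite /ltset /=; rewrite ltNge; apply/negP => h; apply: hn; exact: cutP hy h.
Qed.

Lemma nb_below W C : basic_open W -> W C -> (exists x, cutD C x) ->
  (forall x, cutD C x -> exists2 x', cutD C x' & x < x') ->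
  exists x, cutD C x /\ W (clec x).
Proof.
move=> hW hWC [x0 hx0] hnomax.
have key : forall x, cutD C x -> cut_lt (clec x) C.
  move=> x hx; have [x' hx' hxx'] := hnomax x hx.
  apply: (cut_ltI (y := x')) => //=; last by rewrite /leset /= leNgt hxx'.
  by move=> y; rewrite /leset /= => hy; exact: cutP hx hy.
case: hW hWC => [[C1 [C2 ->]]|[[C1 ->]|[C2 ->]]] /=.
- move=> [h1 h2]; have [x [hx hnx]] := cut_ltE h1.
  exists x; split=> //; split; last exact: cut_lt_le (key x hx) (cut_lt_sub h2).
  apply: (cut_ltI (y := x)) => //=; last by rewrite /leset /=.
  by move=> y hy; move: (cut_le_witness hnx hy); rewrite /ltset /leset /= => /ltW.
- move=> h1; have [x [hx hnx]] := cut_ltE h1.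
  exists x; split=> //.
  apply: (cut_ltI (y := x)) => //=; last by rewrite /leset /=.
  by move=> y hy; move: (cut_le_witness hnx hy); rewrite /ltset /leset /= => /ltW.
- move=> h2; exists x0; split=> //; exact: cut_lt_le (key x0 hx0) (cut_lt_sub h2).
Qed.

Lemma nb_above W C : basic_open W -> W C -> (exists e, ~ cutD C e) ->
  (forall e, ~ cutD C e -> exists2 e', ~ cutD C e' & e' < e) ->
  exists e, ~ cutD C e /\ W (clec e).
Proof.
move=> hW hWC [e0 he0] hnomin.
have key : forall e, ~ cutD C e -> cut_lt C (clec e).
  move=> e he; apply: (cut_ltI (y := e)) => //=; last by rewrite /leset /=.
  by move=> y hy; move: (cut_le_witness he hy); rewrite /ltset /leset /= => /ltW.
have key2 : forall e, ~ cutD C e -> exists2 e', ~ cutD C e' & forall Z, cut_lt C Z -> cutD Z e ->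
    cut_lt C (clec e') /\ cut_lt (clec e') Z.
  move=> e he; have [e' he' he'e] := hnomin e he; exists e' => // Z hCZ hZe; split; first exact: key.
  apply: (cut_ltI (y := e)) => //=; last by rewrite /leset /= leNgt he'e.
  by move=> y; rewrite /leset /= => hy; apply: cutP hZe _; exact: le_trans hy (ltW he'e).
case: hW hWC => [[C1 [C2 ->]]|[[C1 ->]|[C2 ->]]] /=.
- move=> [h1 h2]; have [e [he hne]] := cut_ltE h2.
  have [e' he' /(_ C2 h2 he) [k1 k2]] := key2 e hne.
  exists e'; split=> //; split=> //; exact: cut_lt_le h1 (cut_lt_sub k1).
- move=> h1; exists e0; split=> //; exact: cut_lt_le h1 (cut_lt_sub (key e0 he0)).
- move=> h2; have [e [he hne]] := cut_ltE h2.
  have [e' he' /(_ C2 h2 he) [k1 k2]] := key2 e hne.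
  by exists e'.
Qed.

End Cuts.


Section Balls2.
Variable K : realFieldType.
Implicit Types (x y z a b c e u v w : K) (S T : set K) (X Y Z C : cut K) (A B : set K).

Lemma isb_nonempty B : is_ball B -> exists a, B a.
Proof. by move=> [S [a [_ ->]]]; exists a; exact: ball_center. Qed.

Lemma isb_convex B u v w : is_ball B -> B u -> B w -> u <= v -> v <= w -> B v.
Proof. by move=> [S [a [hS ->]]]; exact: ball_convex. Qed.

Lemma isb_nested B (B2 : set K) c : is_ball B -> is_ball B2 -> B c -> B2 c -> B `<=` B2 \/ B2 `<=` B.
Proof. by move=> [S [a [hS ->]]] [T [b [hT ->]]]; exact: ball_nested. Qed.

Lemma isb_proper B (B2 : set K) x : is_ball B -> is_ball B2 -> B2 `<=` B -> B x -> ~ B2 x ->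
  exists p q, [/\ B p, B q, (forall z, B2 z -> p < z) & (forall z, B2 z -> z < q)].
Proof. by move=> [S [a [hS ->]]] [T [b [hT ->]]]; exact: ball_proper. Qed.

Lemma isb_sep B (B2 : set K) z1 z2 : is_ball B -> is_ball B2 -> (forall c, B c -> B2 c -> False) ->
  B z1 -> B2 z2 -> z1 < z2 -> exists m, (forall z, B z -> z < m) /\ (forall z, B2 z -> m < z).
Proof. by move=> [S [a [hS ->]]] [T [b [hT ->]]]; exact: ball_sep. Qed.

Lemma vfinal0 : vfinal (set0 : set K).
Proof. by split. Qed.

Lemma ball_single e : ball_at set0 e = [set e].
Proof. by apply/seteqP; split=> x /=; rewrite /ball_at /=; [move=> [//|[]]|left]. Qed.

Lemma is_ball_single e : is_ball [set e].
Proof. by exists set0, e; rewrite ball_single; split=> //; exact: vfinal0. Qed.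

Lemma is_ball_setT : is_ball (setT : set K).
Proof.
exists [set x | x != 0], 0; split.
- by split=> // x y _ ->.
- apply/seteqP; split=> x //= _; rewrite /ball_at /=.
  case: (eqVneq x 0) => [->|h]; [by left|right; by rewrite sub0r oppr_eq0].
Qed.

Lemma lowD_single e : lowD [set e] = ltset e.
Proof.
apply/seteqP; split=> x /=; rewrite /lowD /ltset /=; first by apply.
by move=> h a ->.
Qed.

Lemma upD_single e : upD [set e] = leset e.
Proof.
apply/seteqP; split=> x /=; rewrite /upD /leset /=; first by case=> a -> .
by move=> h; exists e.
Qed.

Lemma upD_setT : upD (setT : set K) = setT.
Proof. by apply/seteqP; split=> x // _; exists x. Qed.

Lemma lowD_setT : lowD (setT : set K) = set0.
Proof. by apply/seteqP; split=> x //= h; have := h x I; rewrite ltxx. Qed.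

Lemma open_single (V : set (cut K)) C : interval_open V -> V C ->
  (forall C', V C' -> C' = C) -> ball_cut C.
Proof.
move=> hV hC hsing; have [W [hW hWC hWV]] := hV C hC.
case: hW hWC hWV => [[C1 [C2 ->]]|[[C1 ->]|[C2 ->]]] /= hWC hWV.
- case: hWC => h1 h2; have [e [he hne]] := cut_ltE h2.
  have hZ : cltc e = C.
    apply: hsing; apply: hWV; split.
    + exact: (cut_lt_le (Z := cltc e) h1 (cut_le_witness hne)).
    + apply: (cut_ltI (y := e)) => //=; last by rewrite /ltset /= ltxx.
      by move=> x; rewrite /ltset /= => hx; apply: cutP he _; exact: ltW.
  exists [set e]; split; first exact: is_ball_single.
  by right; rewrite -hZ lowD_single.
- have hZ : ctop K = C by apply: hsing; apply: hWV; exact: (cut_lt_le (Z := ctop K) hWC (fun x _ => I)).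
  by exists setT; split; [exact: is_ball_setT|left; rewrite -hZ upD_setT].
- have hZ : cbot K = C by apply: hsing; apply: hWV; exact: (cut_le_lt (X := cbot K) (fun x (h : set0 x) => match h with end) hWC).
  by exists setT; split; [exact: is_ball_setT|right; rewrite -hZ lowD_setT].
Qed.

Definition LNb (U : set (cut K)) X := (forall Y, cutD Y `<=` cutD X -> U Y) \/
  exists X1, cut_lt X1 X /\ forall Y, cut_lt X1 Y -> cutD Y `<=` cutD X -> U Y.
Definition RNb (U : set (cut K)) X := (forall Y, cutD X `<=` cutD Y -> U Y) \/
  exists X2, cut_lt X X2 /\ forall Y, cut_lt Y X2 -> cutD X `<=` cutD Y -> U Y.

Lemma open_LNRN (U : set (cut K)) X : interval_open U -> U X -> LNb U X /\ RNb U X.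
Proof.
move=> hU hX; have [W [hW hWC hWV]] := hU X hX.
case: hW hWC hWV => [[C1 [C2 ->]]|[[C1 ->]|[C2 ->]]] /= hWC hWV.
- case: hWC => h1 h2; split; right.
  + exists C1; split=> // Y hY hYX; apply: hWV; split=> //; exact: cut_le_lt hYX h2.
  + exists C2; split=> // Y hY hXY; apply: hWV; split=> //; exact: cut_lt_le h1 hXY.
- split; [right; exists C1; split=> // Y hY _; exact: hWV|left].
  by move=> Y hXY; apply: hWV; exact: cut_lt_le hWC hXY.
- split; [left|right; exists C2; split=> // Y hY _; exact: hWV].
  by move=> Y hYX; apply: hWV; exact: cut_le_lt hYX hWC.
Qed.

Lemma LNRN_open (V : set (cut K)) C : V C -> LNb V C -> RNb V C ->
  exists W, [/\ basic_open W, W C & W `<=` V].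
Proof.
move=> hC [hL|[X1 [h1 hL]]] [hR|[X2 [h2 hR]]].
- have hall : forall Y, V Y by move=> Y; case: (cut_total Y C) => h; [exact: hL|exact: hR].
  case: (pselect (cutD C = setT)) => hT.
  + exists [set Y | cut_lt (cbot K) Y]; split.
    * by right; left; exists (cbot K).
    * by apply: (cut_ltI (y := 0)) => //; rewrite hT.
    * by move=> Y _; exact: hall.
  + exists [set Y | cut_lt Y (ctop K)]; split.
    * by right; right; exists (ctop K).
    * by split.
    * by move=> Y _; exact: hall.
- exists [set Y | cut_lt Y X2]; split=> //; [by right; right; exists X2|].
  by move=> Y /= hY; case: (cut_total Y C) => h; [exact: hL|exact: hR].
- exists [set Y | cut_lt X1 Y]; split=> //; [by right; left; exists X1|].
  by move=> Y /= hY; case: (cut_total Y C) => h; [exact: hL|exact: hR].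
- exists [set Y | cut_lt X1 Y /\ cut_lt Y X2]; split=> //; [by left; exists X1, X2|].
  by move=> Y /= [hY1 hY2]; case: (cut_total Y C) => h; [exact: hL|exact: hR].
Qed.

End Balls2.


Section InOut.
Variable K : realFieldType.
Implicit Types (x y z a b c e u v w : K) (S T : set K) (X Y Z C : cut K) (A B : set K).

Lemma notlowD A x : ~ lowD A x -> exists2 a, A a & a <= x.
Proof.
move=> h; have [a [ha hna]] := exNP h; exists a => //; by rewrite leNgt; apply/negP.
Qed.

Lemma notupD A x : ~ upD A x -> forall a, A a -> a < x.
Proof. by move=> h a ha; rewrite ltNge; apply/negP => hxa; apply: h; exists a. Qed.

Lemma lowD_upD A a : A a -> lowD A `<=` upD A.
Proof. by move=> ha x hx; exists a => //; exact: ltW (hx a ha). Qed.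

Definition inside B := [set Y : cut K | cut_lt (clow B) Y /\ cut_lt Y (cup B)].
Definition outside B := [set Y : cut K | cut_lt Y (clow B) \/ cut_lt (cup B) Y].

Lemma inside_full_open B : is_ball B -> full_open (inside B).
Proof.
move=> hB; split; last first.
  by move=> Y hY; exists (inside B); split=> //; left; exists (clow B), (cup B).
move=> Y Y' [h1 h2] [<-|[B2 [hB2 hc]]]; first by split.
have [y [hy hny]] := cut_ltE h1; have [b' hb' hb'y] := notlowD hny.
have hYb' : cutD Y b' by exact: cutP hy hb'y.
have [y2 [hy2 hny2]] := cut_ltE h2; case: hy2 => b hb hy2b.
have hnYb : ~ cutD Y b by move=> h; apply: hny2; exact: cutP h hy2b.
case: hc => -[hY hY'].
- (* Y lower edge of B2 *)
  rewrite hY in hYb' hnYb; have [b2 hb2 hb2b] := notlowD hnYb.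
  have hb'b2 : b' < b2 := hYb' b2 hb2.
  have hBb2 : B b2 by apply: (isb_convex hB hb' hb) => //; exact: ltW.
  have hsub : B2 `<=` B.
    case: (isb_nested hB hB2 hBb2 hb2) => // hs.
    by have := hYb' b' (hs _ hb'); rewrite ltxx.
  have hnb' : ~ B2 b' by move=> h; have := hYb' b' h; rewrite ltxx.
  have [p [q [hp hq hpB2 hqB2]]] := isb_proper hB hB2 hsub hb' hnb'.
  split.
  + apply: (cut_ltI (y := p)); rewrite ?hY' /=.
    * by move=> x hx; exists b2 => //; exact: ltW (hx b2 hBb2).
    * by exists b2 => //; exact: ltW (hpB2 b2 hb2).
    * by move=> h; have := h p hp; rewrite ltxx.
  + apply: (cut_ltI (y := q)); rewrite ?hY' /=.
    * by move=> x [z hz hxz]; exists z => //; exact: hsub.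
    * by exists q.
    * by move=> [z hz hqz]; have := hqB2 z hz; rewrite ltNge hqz.
- (* Y upper edge of B2 *)
  rewrite hY in hYb' hnYb; case: hYb' => b2 hb2 hb'b2.
  have hb2b : b2 < b := notupD hnYb hb2.
  have hBb2 : B b2 by apply: (isb_convex hB hb' hb) => //; exact: ltW.
  have hsub : B2 `<=` B.
    case: (isb_nested hB hB2 hBb2 hb2) => // hs.
    by have := hb2b; have := notupD hnYb (hs _ hb); rewrite ltxx.
  have hnb : ~ B2 b by move=> h; have := notupD hnYb h; rewrite ltxx.
  have [p [q [hp hq hpB2 hqB2]]] := isb_proper hB hB2 hsub hb hnb.
  split.
  + apply: (cut_ltI (y := p)); rewrite ?hY' /=.
    * by move=> x hx z hz; apply: hx; exact: hsub.
    * by move=> z hz; exact: hpB2.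
    * by move=> h; have := h p hp; rewrite ltxx.
  + apply: (cut_ltI (y := q)); rewrite ?hY' /=.
    * by move=> x hx; exists b2 => //; exact: ltW (hx b2 hb2).
    * by exists q.
    * by move=> h; have := h b2 hb2; have := hqB2 b2 hb2; move=> k1 k2; have := lt_trans k1 k2; rewrite ltxx.
Qed.

Lemma outside_full_open B : is_ball B -> full_open (outside B).
Proof.
move=> hB; split; last first.
  move=> Y [hY|hY].
  - exists [set Z | cut_lt Z (clow B)]; split=> //; [by right; right; exists (clow B)|].
    by move=> Z hZ; left.
  - exists [set Z | cut_lt (cup B) Z]; split=> //; [by right; left; exists (cup B)|].
    by move=> Z hZ; right.
have [a ha] := isb_nonempty hB.
move=> Y Y' hYo [<-|[B2 [hB2 hc]]]; first by [].
have [b0 hb0] := isb_nonempty hB2.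
case: hYo => hYB.
- have [y [hy hny]] := cut_ltE hYB.
  case: hc => -[hY hY'].
  + rewrite hY in hny; have [b2 hb2 hb2y] := notlowD hny.
    case: (pselect (exists c, B c /\ B2 c)) => [[c [hc1 hc2]]|hdis].
    * have hsub : B `<=` B2.
        case: (isb_nested hB hB2 hc1 hc2) => // hs.
        by have := hy b2 (hs _ hb2); rewrite ltNge hb2y.
      have hne : ~ (B2 `<=` B).
        move=> hs; have e : B = B2 by apply/seteqP; split.
        have hYeq : Y = clow B by apply: cut_eq; rewrite hY -e.
        by rewrite -hYeq in hYB; exact: cut_lt_irr hYB.
      have [x [hx hnx]] := exNP hne.
      have [p [q [hp hq hpB hqB]]] := isb_proper hB2 hB hsub hx hnx.
      right; apply: (cut_ltI (y := q)); rewrite ?hY' /=.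
      -- by move=> z [w hw hzw]; exists w => //; exact: hsub.
      -- by exists q.
      -- by move=> [w hw hqw]; have := hqB w hw; rewrite ltNge hqw.
    * have hdis' : forall c, B2 c -> B c -> False by move=> c h1 h2; apply: hdis; exists c.
      have [m [hm1 hm2]] := isb_sep hB2 hB hdis' hb2 ha (le_lt_trans hb2y (hy a ha)).
      left; apply: (cut_ltI (y := m)); rewrite ?hY' /=.
      -- move=> z [w hw hzw] u hu; exact: le_lt_trans hzw (lt_trans (hm1 w hw) (hm2 u hu)).
      -- by move=> u hu; exact: hm2.
      -- by move=> [w hw hmw]; have := hm1 w hw; rewrite ltNge hmw.
  + left; apply: (cut_ltI (y := y)); rewrite ?hY' /=.
    * move=> z hz; have : cutD Y z by rewrite hY; exact: lowD_upD hb0 _ hz.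
      exact: (cut_lt_sub hYB).
    * exact: hy.
    * by move=> h; apply: hny; rewrite hY; exact: lowD_upD hb0 _ h.
- have [y [hy hny]] := cut_ltE hYB.
  case: hc => -[hY hY'].
  + right; apply: (cut_ltI (y := y)); rewrite ?hY' /=.
    * move=> z hz; have : cutD Y z by exact: (cut_lt_sub hYB).
      by rewrite hY; exact: lowD_upD hb0 z.
    * by rewrite hY in hy; exact: lowD_upD hb0 _ hy.
    * exact: hny.
  + rewrite hY in hy; case: hy => b2 hb2 hyb2.
    case: (pselect (exists c, B c /\ B2 c)) => [[c [hc1 hc2]]|hdis].
    * have hsub : B `<=` B2.
        case: (isb_nested hB hB2 hc1 hc2) => // hs.
        by exfalso; apply: hny; exists b2 => //; exact: hs.
      have hne : ~ (B2 `<=` B).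
        move=> hs; have e : B = B2 by apply/seteqP; split.
        have hYeq : Y = cup B by apply: cut_eq; rewrite hY -e.
        by rewrite -hYeq in hYB; exact: cut_lt_irr hYB.
      have [x [hx hnx]] := exNP hne.
      have [p [q [hp hq hpB hqB]]] := isb_proper hB2 hB hsub hx hnx.
      left; apply: (cut_ltI (y := p)); rewrite ?hY' /=.
      -- by move=> z hz w hw; apply: hz; exact: hsub.
      -- by move=> w hw; exact: hpB.
      -- by move=> h; have := h p hp; rewrite ltxx.
    * have hdis' : forall c, B c -> B2 c -> False by move=> c h1 h2; apply: hdis; exists c.
      have [m [hm1 hm2]] := isb_sep hB hB2 hdis' ha hb2 (lt_le_trans (notupD hny ha) hyb2).
      right; apply: (cut_ltI (y := m)); rewrite ?hY' /=.
      -- move=> z [w hw hzw] u hu; exact: le_lt_trans hzw (lt_trans (hm1 w hw) (hm2 u hu)).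
      -- by move=> u hu; exact: hm2.
      -- by move=> [w hw hmw]; have := hm1 w hw; rewrite ltNge hmw.
Qed.

End InOut.


Lemma discrete_step (P : nat -> Prop) N : P 0%N -> ~ P N -> exists k, P k /\ ~ P k.+1.
Proof.
elim: N => [h0 hn|N IH h0 hn]; first by [].
case: (pselect (P N)) => hN; [by exists N|exact: IH].
Qed.

Section Ext.
Variables (R F : realFieldType) (i : {rmorphism R -> F}).
Hypothesis i_mono : {mono i : x y / x <= y}.
Implicit Types (r s d e a : R) (x y z g : F).

Lemma i_lt : {mono i : x y / x < y}.
Proof. by move=> x y; rewrite !lt_def !i_mono eq_le !i_mono -eq_le. Qed.

Lemma i_eq r s : (i r == i s) = (r == s).
Proof. by rewrite !eq_le !i_mono. Qed.

Lemma i_norm r : i `|r| = `|i r|.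
Proof.
case: (normP r) => -[h ->].
- by rewrite ger0_norm // -(rmorph0 i) i_mono.
- by rewrite rmorphN ltr0_norm // -(rmorph0 i) i_lt.
Qed.

Lemma i_vle r s : vle r s -> vle (i r) (i s).
Proof.
move=> [n h]; exists n; rewrite -!i_norm -(rmorph_nat i) -rmorphM i_mono //.
Qed.

Lemma ext_upD_dc (A : set R) x y : ext_upD i A x -> y <= x -> ext_upD i A y.
Proof. by move=> [a ha hxa] hyx; exists a => //; exact: le_trans hyx hxa. Qed.
Lemma ext_lowD_dc (A : set R) x y : ext_lowD i A x -> y <= x -> ext_lowD i A y.
Proof. by move=> h hyx a ha; exact: le_lt_trans hyx (h a ha). Qed.
Definition clo (A : set R) := @Cut F (ext_upD i A) (@ext_upD_dc A).
Definition chi (A : set R) := @Cut F (ext_lowD i A) (@ext_lowD_dc A).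

Definition gtD (A : set R) := [set x | forall b, A b -> b < x].

Lemma lo_sub_hi (C : cut R) : ext_upD i (cutD C) `<=` ext_lowD i (~` cutD C).
Proof.
move=> y [d hd hyd] e he; apply: le_lt_trans hyd _; rewrite i_lt.
by rewrite ltNge; apply/negP => h; apply: he; exact: cutP hd h.
Qed.

Lemma compl_upD (A : set R) : ~` upD A = gtD A.
Proof.
apply/seteqP; split=> x /=.
- by move=> h b hb; rewrite ltNge; apply/negP => hxb; apply: h; exists b.
- by move=> h [b hb hxb]; have := h b hb; rewrite ltNge hxb.
Qed.

Variable iota : cut R -> cut F.
Hypothesis hcomp : forall C, restrict i (iota C) = cutD C.

Lemma compat_iff C r : cutD (iota C) (i r) <-> cutD C r.
Proof. by rewrite -(hcomp C). Qed.

Lemma F3a C : ext_upD i (cutD C) `<=` cutD (iota C).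
Proof. by move=> y [d hd hyd]; apply: cutP hyd; apply/compat_iff. Qed.

Lemma F3b C : cutD (iota C) `<=` ext_lowD i (~` cutD C).
Proof.
move=> y hy e he; rewrite ltNge; apply/negP => hey; apply: he; apply/compat_iff.
exact: cutP hy hey.
Qed.

Lemma F4 C' C : cut_lt C' C -> cutD (iota C') `<=` ext_upD i (cutD C).
Proof.
move=> hlt; have [d [hd hnd]] := cut_ltE hlt; move=> y hy; exists d => //.
rewrite leNgt; apply/negP => hdy; apply: hnd; apply/compat_iff; apply: cutP hy _; exact: ltW.
Qed.

Lemma F5 C C' : cut_lt C C' -> ext_lowD i (~` cutD C) `<=` cutD (iota C').
Proof.
move=> hlt; have [e [he hne]] := cut_ltE hlt; move=> y hy.
have h1 : cutD (iota C') (i e) by apply/compat_iff.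
exact: cutP h1 (ltW (hy e hne)).
Qed.

Lemma iota_mono C' C : cutD C' `<=` cutD C -> cutD (iota C') `<=` cutD (iota C).
Proof.
move=> h; case: (cut_total (iota C') (iota C)) => // h2.
have e : C' = C.
  apply: cut_eq; apply/seteqP; split=> // r hr; apply/compat_iff; apply: h2; exact/compat_iff.
by rewrite e.
Qed.

End Ext.


Lemma lt_from (F : realFieldType) (x1 x2 g1 g2 w s : F) :
  x1 < g1 -> g2 < x2 -> g2 - g1 = w -> x2 - x1 = s -> w < s.
Proof. move=> *; lra. Qed.

Lemma arith_gap (F : realFieldType) (w u ist : F) (m : nat) : 0 < w -> u <= m%:R * w ->
  ist = u / (2 * (m.+1)%:R) -> w < ist -> False.
Proof.
move=> hw hu -> hlt.
have hM : (0 : F) < (m.+1)%:R by rewrite ltr0n.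
have h2M : (0 : F) < 2 * (m.+1)%:R by rewrite mulr_gt0.
move: hlt; rewrite ltr_pdivlMr // => hlt.
have : m%:R * w <= (m.+1)%:R * w by apply: ler_wpM2r; [exact: ltW|rewrite ler_nat].
set a := m%:R * w; set b := (m.+1)%:R * w.
have : w * (2 * (m.+1)%:R) = 2 * b by rewrite /b; ring.
have : 0 < b by rewrite /b mulr_gt0.
move=> *; lra.
Qed.

Section Gap.
Variables (R F : realFieldType) (i : {rmorphism R -> F}).
Hypothesis i_mono : {mono i : x y / x <= y}.
Implicit Types (r s d e a : R) (x y z g : F).

Lemma i_eq0 r : (i r = 0) <-> (r = 0).
Proof.
split=> [h|->]; last exact: rmorph0.
by apply/eqP; rewrite -(i_eq i_mono) h rmorph0.
Qed.

Lemma pre_ball (B : set F) d : is_ball B -> B (i d) -> is_ball [set r | B (i r)].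
Proof.
move=> [T [c [hT ->]]] hd; rewrite (ball_recenter hT hd).
exists [set s | T (i s)], d; split.
- split.
  + move=> s hs; apply/eqP => h0; have := hT.1 _ hs; by rewrite h0 rmorph0 eqxx.
  + move=> x y hx hy hxy; apply: hT.2 hx _ (i_vle i_mono hxy).
    by apply/eqP => /(i_eq0) h; move: hy; rewrite h eqxx.
- apply/seteqP; split=> r /=; rewrite !ball_atE /inS0 -rmorphB => -[h|h];
    by [left; apply/i_eq0|right|left; apply/i_eq0|right].
Qed.

Variable C : cut R.
Hypothesis hnb : ~ ball_cut C.
Let D := cutD C.
Definition gap := [set y : F | (forall d, D d -> i d < y) /\ (forall e, ~ D e -> y < i e)].

Lemma meetE (B : set F) g d : is_ball B -> gap g -> B g -> D d -> B (i d) ->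
  exists e, ~ D e /\ B (i e).
Proof.
move=> hB [hg1 hg2] hBg hd hBd; apply: contrapT => hne.
have hno : forall e, ~ D e -> ~ B (i e) by move=> e he hBe; apply: hne; exists e.
apply: hnb; exists [set r | B (i r)]; split; first exact: pre_ball hBd.
left; apply/seteqP; split=> x /=.
- move=> hx; case: (lerP x d) => hxd; first by exists d.
  exists x => //; apply: (isb_convex hB hBd hBg); [by rewrite i_mono ltW|exact: ltW (hg1 x hx)].
- move=> [r hr hxr]; apply: cutP _ hxr; apply: contrapT => hnr; exact: hno hnr hr.
Qed.

Lemma meetD (B : set F) g e : is_ball B -> gap g -> B g -> ~ D e -> B (i e) ->
  exists d, D d /\ B (i d).
Proof.
move=> hB [hg1 hg2] hBg he hBe; apply: contrapT => hne.
have hno : forall d, D d -> ~ B (i d) by move=> d hd hBd; apply: hne; exists d.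
apply: hnb; exists [set r | B (i r)]; split; first exact: pre_ball hBe.
right; apply/seteqP; split=> x /=.
- move=> hx r hr; rewrite ltNge; apply/negP => hrx; apply: hno hr; exact: cutP hx hrx.
- move=> hx; apply: contrapT => hnx.
  have hBx : B (i x).
    apply: (isb_convex hB hBg hBe); first exact: ltW (hg2 x hnx).
    by rewrite i_mono; exact: ltW (hx e hBe).
  by have := hx x hBx; rewrite ltxx.
Qed.

Lemma gap_lowD g : gap g -> lowD gap = ext_upD i D.
Proof.
move=> hg; apply/seteqP; split=> y /=.
- move=> hy; apply: contrapT => hn.
  have hG : gap y.
    split; last by move=> e he; exact: lt_trans (hy g hg) (hg.2 e he).
    by move=> d hd; rewrite ltNge; apply/negP => h; apply: hn; exists d.
  by have := hy y hG; rewrite ltxx.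
- by move=> [d hd hyd] z [hz _]; exact: le_lt_trans hyd (hz d hd).
Qed.

Lemma gap_upD g : gap g -> upD gap = ext_lowD i (~` D).
Proof.
move=> hg; apply/seteqP; split=> y /=.
- by move=> [z [_ hz] hyz] e he; exact: le_lt_trans hyz (hz e he).
- move=> hy; case: (lerP y g) => hyg; first by exists g.
  exists y => //; split=> // d hd; exact: lt_trans (hg.1 d hd) hyg.
Qed.

Lemma gap_empty : ~ (exists g, gap g) -> ext_upD i D = ext_lowD i (~` D).
Proof.
move=> hne; apply/seteqP; split; first exact: lo_sub_hi.
move=> y hy; apply: contrapT => hn; apply: hne; exists y; split=> // d hd.
by rewrite ltNge; apply/negP => h; apply: hn; exists d.
Qed.

Lemma ballw_bound (T : set F) g (w : F) x : w > 0 ->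
  T = [set u | u != 0 /\ vle w u] -> ball_at T g x -> exists m : nat, `|g - x| <= m%:R * w.
Proof.
move=> hw hT; rewrite ball_atE /inS0 => -[->|]; first by exists 0%N; rewrite normr0 mul0r.
rewrite hT /= => -[_ [m hm]]; exists m; move: hm; by rewrite (gtr0_norm hw).
Qed.

Lemma gap_ball y0 : gap y0 -> gap = ball_at [set x | x != 0 /\ forall r, ~ vle x (y0 - i r)] y0.
Proof.
move=> hy0; set T := [set x : F | _].
apply/seteqP; split=> z hz; last first.
  case: hz => [->|[hz0 hzT]]; first exact: hy0.
  split.
  - move=> d hd; rewrite ltNge; apply/negP => hzd; apply: (hzT d); apply: vle_le.
    have := hy0.1 d hd; move=> h; rewrite !gtr0_norm; [|lra|lra]; lra.
  - move=> e he; rewrite ltNge; apply/negP => hez; apply: (hzT e); apply: vle_le.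
    have := hy0.2 e he; move=> h; rewrite !ltr0_norm; [|lra|lra]; lra.
case: (eqVneq z y0) => [->|hzy]; first by left.
right; split; first by rewrite subr_eq0 eq_sym.
move=> r [n hn].
pose w := `|y0 - z|.
have hw : 0 < w by rewrite normr_gt0 subr_eq0 eq_sym.
have [g1 [g2 [hG1 hG2 hg12 hgy]]] : exists g1 g2, [/\ gap g1, gap g2, g2 - g1 = w & `|g1 - y0| <= w].
  case: (lerP y0 z) => h.
  - exists y0, z; split=> //; first by rewrite /w ler0_norm ?opprB // subr_le0.
    by rewrite subrr normr0 normr_ge0.
  - exists z, y0; split=> //; first by rewrite /w gtr0_norm // subr_gt0.
    by rewrite distrC.
pose T1 := [set u : F | u != 0 /\ vle w u].
have hT1 : vfinal T1.
  split; first by move=> x [].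
  by move=> x y [_ hx] hy hxy; split=> //; exact: vle_trans hx hxy.
have hB1 : is_ball (ball_at T1 g1) by exists T1, g1.
have hB1g : ball_at T1 g1 g1 by exact: ball_center.
have hB1r : ball_at T1 g1 (i r).
  rewrite ball_atE; case: (eqVneq (g1 - i r) 0) => h; [by left|right; split=> //].
  exists n.+1; rewrite -/w.
  have e1 : g1 - i r = (y0 - i r) + (g1 - y0) by ring.
  rewrite e1; apply: (le_trans (ler_normD _ _)); rewrite -addn1 natrD mulrDl mul1r.
  rewrite (gtr0_norm hw); apply: lerD => //; by rewrite -/w in hn.
have [d [e [hd he hBd hBe]]] : exists d e, [/\ D d, ~ D e, ball_at T1 g1 (i d) & ball_at T1 g1 (i e)].
  case: (pselect (D r)) => hr.
  - have [e [he hBe]] := meetE hB1 hG1 hB1g hr hB1r; by exists r, e.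
  - have [d [hd hBd]] := meetD hB1 hG1 hB1g hr hB1r; by exists d, r.
have [m1 hm1] := ballw_bound hw (erefl _) hBd.
have [m2 hm2] := ballw_bound hw (erefl _) hBe.
have hde : d < e by rewrite ltNge; apply/negP => h; apply: he; exact: cutP hd h.
pose M := (m1 + m2).+1.
have hM : (0 : R) < M%:R by rewrite ltr0n.
have hMF : (0 : F) < M%:R by rewrite ltr0n.
pose st := (e - d) / (2 * M%:R).
have hP0 : D (d + 0%:R * st) by rewrite mul0r addr0.
have hPN : ~ D (d + (2 * M)%N%:R * st).
  have hne : (2 * M%:R : R) != 0 by apply: lt0r_neq0; rewrite mulr_gt0.
  have -> : (2 * M)%N%:R * st = e - d by rewrite /st natrM mulrC divfK.
  by rewrite addrC subrK.
have [k [hk hk1]] := discrete_step (P := fun k => D (d + k%:R * st)) hP0 hPN.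
have h1 := hG1.1 _ hk; have h2 := hG2.2 _ hk1.
have hst : i st = (i e - i d) / (2 * M%:R).
  by rewrite /st rmorphM rmorphV ?unitfE ?lt0r_neq0 ?mulr_gt0 // rmorphB rmorphM !rmorph_nat.
have hdiff : i (d + k.+1%:R * st) - i (d + k%:R * st) = i st.
  by rewrite -rmorphB; congr (i _); rewrite -addn1 natrD; ring.
have hbound : i e - i d <= (m1 + m2)%:R * w.
  have hh : i e - i d <= `|g1 - i d| + `|g1 - i e|.
    have := ler_norm (g1 - i d); have := ler_norm (i e - g1); rewrite distrC.
    clear; move=> p q; lra.
  by apply: (le_trans hh); rewrite natrD mulrDl; exact: lerD.
have hlt := lt_from h1 h2 hg12 hdiff.
exact: (arith_gap hw hbound hst hlt).
Qed.

End Gap.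


Lemma vfinal_up (K : realFieldType) (S : set K) : vfinal S ->
  forall x y, S x -> y != 0 -> vle x y -> S y.
Proof. by case. Qed.
Lemma vfinal_nz (K : realFieldType) (S : set K) : vfinal S -> forall x, S x -> x != 0.
Proof. by case. Qed.

Section BallEdges.
Variable K : realFieldType.
Variables (S : set K) (a : K).
Hypothesis hS : vfinal S.
Let B0 := ball_at S a.
Implicit Types (b c x : K).

Lemma ball_not_setT : B0 <> setT -> exists c, c != 0 /\ ~ S c.
Proof.
move=> hne; apply: contrapT => hn; apply: hne; apply/seteqP; split=> // b _.
rewrite /B0 ball_atE; case: (eqVneq (a - b) 0) => h; [by left|right].
by apply: contrapT => hS'; apply: hn; exists (a - b).
Qed.

Lemma far_out c b : c != 0 -> ~ S c -> B0 b -> `|c| <= `|a - b| -> False.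
Proof.
move=> hc hSc; rewrite /B0 ball_atE => -[h|h] hle.
- by move: hle; rewrite h normr0 normr_le0 (negbTE hc).
- apply: hSc; have [_ hup] := hS; apply: hup h hc _; exact: vle_le.
Qed.

Lemma lowD_ne : B0 <> setT -> exists x, lowD B0 x.
Proof.
move=> /ball_not_setT [c [hc hSc]]; exists (a - `|c|) => b hb.
rewrite ltNge; apply/negP => hba; apply: (far_out hc hSc hb).
have hc0 := normr_ge0 c; rewrite [`|a - b|]ger0_norm; lra.
Qed.

Lemma gtD_ne : B0 <> setT -> exists x, gtD B0 x.
Proof.
move=> /ball_not_setT [c [hc hSc]]; exists (a + `|c|) => b hb.
rewrite ltNge; apply/negP => hba; apply: (far_out hc hSc hb).
have hc0 := normr_ge0 c; rewrite [`|a - b|]ler0_norm; lra.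
Qed.

Lemma half_out x : ~ B0 x -> ~ B0 ((x + a) / 2).
Proof.
move=> hx; rewrite /B0 !ball_atE => h; apply: hx; rewrite /B0 ball_atE.
apply: inS0_up h _ => //; exists 2%N.
have -> : a - (x + a) / 2 = (a - x) / 2 by field.
rewrite normrM [`|2^-1|]ger0_norm ?invr_ge0 //; set u := `|_|.
have : 0 <= u by apply: normr_ge0.
move=> hu; lra.
Qed.

Lemma lowD_nomax x : lowD B0 x -> exists2 x', lowD B0 x' & x < x'.
Proof.
move=> hx; have hxa : x < a := hx a (ball_center _ _).
have hnx : ~ B0 x by move=> h; have := hx x h; rewrite ltxx.
exists ((x + a) / 2); last lra.
move=> b hb; rewrite ltNge; apply/negP => hb2; apply: (half_out hnx).
apply: (ball_convex hS hb (ball_center _ _) hb2); lra.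
Qed.

Lemma gtD_nomin x : gtD B0 x -> exists2 x', gtD B0 x' & x' < x.
Proof.
move=> hx; have hxa : a < x := hx a (ball_center _ _).
have hnx : ~ B0 x by move=> h; have := hx x h; rewrite ltxx.
exists ((x + a) / 2); last lra.
move=> b hb; rewrite ltNge; apply/negP => hb2; apply: (half_out hnx).
apply: (ball_convex hS (ball_center _ _) hb _ hb2); lra.
Qed.

End BallEdges.

Section Edges.
Variables (R F : realFieldType) (i : {rmorphism R -> F}).
Hypothesis i_mono : {mono i : x y / x <= y}.

Variables (S : set R) (a : R).
Hypothesis hS : vfinal S.
Let B0 := ball_at S a.

Definition Sp := [set y : F | y != 0 /\ forall c : R, c != 0 -> ~ S c -> ~ vle y (i c)].
Definition Bp := ball_at Sp (i a).

Lemma vfinal_Sp : vfinal Sp.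
Proof.
split; first by move=> x [].
move=> x y [hx0 hx] hy hxy; split=> // c hc hSc hyc; exact: hx c hc hSc (vle_trans hxy hyc).
Qed.

Lemma i_pos r : 0 < r -> 0 < i r.
Proof. by move=> h; rewrite -(rmorph0 i) (i_lt i_mono). Qed.

Lemma Bp_low : lowD Bp = ext_upD i (lowD B0).
Proof.
apply/seteqP; split=> y /=.
- move=> hy; have hya : y < i a := hy (i a) (ball_center _ _).
  have hny : ~ Sp (i a - y).
    by move=> h; have := hy y (or_intror h); rewrite ltxx.
  have [c [hc [hSc hvle]]] : exists c, c != 0 /\ ~ S c /\ vle (i a - y) (i c).
    apply: contrapT => hn; apply: hny; split; first by rewrite subr_eq0 gt_eqF.
    move=> c hc hSc hv; apply: hn; by exists c.
  case: hvle => n hn.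
  have hc0 : 0 < `|c| by rewrite normr_gt0.
  pose c' := `|c| / n.+1%:R.
  have hc'0 : 0 < c' by rewrite /c' divr_gt0.
  exists (a - c').
  + move=> b; rewrite /B0 ball_atE => -[hb|hb].
      have -> : b = a by apply/eqP; rewrite eq_sym -subr_eq0 hb.
      lra.
    rewrite ltNge; apply/negP => hba; apply: hSc; apply: (vfinal_up hS hb hc).
    exists n.+1; rewrite [`|a - b|]ger0_norm; last lra.
    have : `|c| = n.+1%:R * c' by rewrite /c' mulrC divfK // pnatr_eq0.
    move=> ->; apply: ler_wpM2l => //; lra.
  + have hic : i c' <= i a - y.
      rewrite /c' rmorphM rmorphV ?unitfE ?pnatr_eq0 // rmorph_nat i_norm //.
      rewrite ler_pdivrMr ?ltr0n //; rewrite [`|i a - y|]ger0_norm in hn; last lra.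
      apply: (le_trans hn); rewrite mulrC; apply: ler_wpM2l; first lra.
      by rewrite ler_nat.
    rewrite rmorphB; lra.
- move=> [d hd hyd] z; rewrite /Bp ball_atE /inS0 => -[hz|[hz0 hz]].
  + have hda : d < a := hd a (ball_center _ _).
    have : i d < i a by rewrite (i_lt i_mono).
    have -> : z = i a by apply/eqP; rewrite eq_sym -subr_eq0 hz.
    lra.
  + rewrite ltNge; apply/negP => hzy.
    have hda : d < a := hd a (ball_center _ _).
    have hSc : ~ S (a - d).
      by move=> h; have := hd d (or_intror h); rewrite ltxx.
    apply: (hz (a - d)); [by rewrite subr_eq0 gt_eqF|done|].
    apply: vle_le; rewrite rmorphB.
    have : i d < i a by rewrite (i_lt i_mono).
    move=> h; rewrite !gtr0_norm; lra.
Qed.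

Lemma Bp_up : upD Bp = ext_lowD i (gtD B0).
Proof.
apply/seteqP; split=> y /=.
- move=> [z hz hyz] e he; apply: le_lt_trans hyz _.
  have hae : a < e := he a (ball_center _ _).
  have : i a < i e by rewrite (i_lt i_mono).
  move: hz; rewrite /Bp ball_atE /inS0 => -[hz|[hz0 hz]] hiae.
  + have -> : z = i a by apply/eqP; rewrite eq_sym -subr_eq0 hz.
    done.
  + rewrite ltNge; apply/negP => hez.
    have hSc : ~ S (a - e).
      by move=> h; have := he e (or_intror h); rewrite ltxx.
    apply: (hz (a - e)); [by rewrite subr_eq0 lt_eqF|done|].
    apply: vle_le; rewrite rmorphB !ltr0_norm; lra.
- move=> hy; case: (lerP y (i a)) => hya; first by exists (i a) => //; exact: ball_center.
  case: (pselect (Sp (i a - y))) => hSy; first by exists y => //; right.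
  have [c [hc [hSc hvle]]] : exists c, c != 0 /\ ~ S c /\ vle (i a - y) (i c).
    apply: contrapT => hn; apply: hSy; split; first by rewrite subr_eq0 lt_eqF.
    move=> c hc hSc hv; apply: hn; by exists c.
  case: hvle => n hn.
  have hc0 : 0 < `|c| by rewrite normr_gt0.
  pose c' := `|c| / n.+1%:R.
  have hc'0 : 0 < c' by rewrite /c' divr_gt0.
  have hge : gtD B0 (a + c').
    move=> b; rewrite /B0 ball_atE => -[hb|hb].
      have -> : b = a by apply/eqP; rewrite eq_sym -subr_eq0 hb.
      lra.
    rewrite ltNge; apply/negP => hba; apply: hSc; apply: (vfinal_up hS hb hc).
    exists n.+1; rewrite [`|a - b|]ler0_norm; last lra.
    have : `|c| = n.+1%:R * c' by rewrite /c' mulrC divfK // pnatr_eq0.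
    move=> ->; apply: ler_wpM2l => //; lra.
  have hic : i c' <= y - i a.
    rewrite /c' rmorphM rmorphV ?unitfE ?pnatr_eq0 // rmorph_nat i_norm //.
    rewrite ler_pdivrMr ?ltr0n //; rewrite [`|i a - y|]ltr0_norm in hn; last lra.
    apply: (le_trans hn); rewrite opprB [X in _ <= X]mulrC; apply: ler_wpM2r; first lra.
    by rewrite ler_nat.
  have := hy _ hge; rewrite rmorphD; lra.
Qed.

Hypothesis vR_convex : forall (x : F) (a b : R), x != 0 -> a != 0 -> b != 0 ->
      vle (i a) x -> vle x (i b) -> exists2 r : R, r != 0 & veq (i r) x.

Lemma Bp_reach s0 c0 z : S s0 -> c0 != 0 -> ~ S c0 -> Bp z ->
  exists s, S s /\ 0 < s /\ `|i a - z| <= i s.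
Proof.
move=> hs0 hc0 hSc0 hz.
have hs00 : s0 != 0 := (vfinal_nz hS) _ hs0.
have bigS : forall (r : R) (n : nat), S r -> S (n.+1%:R * `|r|).
  move=> r n hr; apply: (vfinal_up hS hr).
    by rewrite mulf_neq0 ?pnatr_eq0 // normr_eq0 ((vfinal_nz hS) _ hr).
  by exists n.+1; rewrite normrM normr_id ger0_norm ?ler0n.
have bigpos : forall (r : R) (n : nat), r != 0 -> 0 < n.+1%:R * `|r|.
  by move=> r n hr; apply: mulr_gt0; [rewrite ltr0n|rewrite normr_gt0].
have ibig : forall (r : R) (n : nat), i (n.+1%:R * `|r|) = n.+1%:R * `|i r|.
  by move=> r n; rewrite rmorphM rmorph_nat i_norm.
move: hz; rewrite /Bp ball_atE /inS0 => -[hz|[hz0 hz]].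
  exists (0.+1%:R * `|s0|); split; first exact: bigS.
  split; first exact: bigpos.
  rewrite hz normr0 ibig; apply: mulr_ge0 => //.
case: (pselect (vle (i s0) (i a - z))) => hv.
  case: hv => n hn; exists (n.+1%:R * `|s0|); split; first exact: bigS.
  split; first exact: bigpos.
  rewrite ibig; apply: (le_trans hn); apply: ler_wpM2r => //; by rewrite ler_nat.
have hv2 : vle (i a - z) (i s0) by case: (vle_total (i s0) (i a - z)).
have hv3 : vle (i c0) (i a - z).
  case: (vle_total (i c0) (i a - z)) => // h; exfalso; exact: hz c0 hc0 hSc0 h.
have [r hr [hr1 hr2]] := vR_convex hz0 hc0 hs00 hv3 hv2.
have hSr : S r by apply: contrapT => hn; exact: hz r hr hn hr2.
case: hr1 => n hn; exists (n.+1%:R * `|r|); split; first exact: bigS.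
split; first exact: bigpos.
rewrite ibig; apply: (le_trans hn); apply: ler_wpM2r => //; by rewrite ler_nat.
Qed.

Lemma convex_low s0 c0 : S s0 -> c0 != 0 -> ~ S c0 ->
  ext_upD i (lowD B0) = ext_lowD i (~` lowD B0).
Proof.
move=> hs0 hc0 hSc0; apply/seteqP; split=> y /=.
- move=> [d hd hyd] e he; apply: le_lt_trans hyd _; rewrite (i_lt i_mono).
  by rewrite ltNge; apply/negP => h; apply: he; exact: lowD_dc hd h.
- move=> hy; rewrite -Bp_low => z hz.
  have [s [hs [hs0' hle]]] := Bp_reach hs0 hc0 hSc0 hz.
  have hb : B0 (a - s).
    rewrite /B0 ball_atE; have -> : a - (a - s) = s by ring.
    by right.
  have hnl : ~ lowD B0 (a - s) by move=> h; have := h _ hb; rewrite ltxx.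
  have := hy _ hnl; rewrite rmorphB.
  have := ler_norm (i a - z); lra.
Qed.

Lemma convex_up s0 c0 : S s0 -> c0 != 0 -> ~ S c0 ->
  ext_lowD i (gtD B0) = ext_upD i (upD B0).
Proof.
move=> hs0 hc0 hSc0; apply/seteqP; split=> y /=.
- rewrite -Bp_up => -[z hz hyz].
  have [s [hs [hs0' hle]]] := Bp_reach hs0 hc0 hSc0 hz.
  have hb : B0 (a + s).
    rewrite /B0 ball_atE; have -> : a - (a + s) = - s by ring.
    by apply: inS0_opp => //; right.
  exists (a + s); first by exists (a + s).
  rewrite rmorphD; have h := ler_norm (z - i a); rewrite distrC in h; lra.
- move=> [b' [b hb hb'b] hyb'] e he; apply: le_lt_trans hyb' _; rewrite (i_lt i_mono).
  exact: le_lt_trans hb'b (he b hb).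
Qed.

End Edges.

Section Hull.
Variables (R F : realFieldType) (i : {rmorphism R -> F}).
Hypothesis i_mono : {mono i : x y / x <= y}.

Definition Spp := [set y : F | y != 0 /\ exists r : R, vle (i r) y].
Definition Bpp := ball_at Spp 0.

Lemma vfinal_Spp : vfinal Spp.
Proof.
split; first by move=> x [].
move=> x y [hx0 [r hr]] hy hxy; split=> //; exists r; exact: vle_trans hr hxy.
Qed.

Lemma Bpp_i r : Bpp (i r).
Proof.
rewrite /Bpp ball_atE /inS0; case: (eqVneq (0 - i r) 0) => h; [by left|right].
by split=> //; exists r; apply: vle_le; rewrite sub0r normrN.
Qed.

Lemma Bpp_bound z : Bpp z -> exists r : R, `|z| <= i r.
Proof.
rewrite /Bpp ball_atE /inS0 => -[h|[_ [r [n hn]]]].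
  have hz0 : z = 0 by apply/eqP; rewrite -oppr_eq0 -sub0r h.
  by exists 0; rewrite rmorph0 hz0 normr0.
exists (n%:R * `|r|); rewrite rmorphM rmorph_nat (i_norm i_mono); move: hn.
by rewrite sub0r normrN.
Qed.

Lemma Bpp_low : lowD Bpp = ext_lowD i setT.
Proof.
apply/seteqP; split=> y /=.
- move=> hy r _; exact: hy _ (Bpp_i r).
- move=> hy z hz; have [r hr] := Bpp_bound hz.
  have := hy (- r) I; rewrite rmorphN; have := ler_normr z; have := ler_norm (- z).
  rewrite normrN; lra.
Qed.

Lemma Bpp_up : upD Bpp = ext_upD i setT.
Proof.
apply/seteqP; split=> y /=.
- move=> [z hz hyz]; have [r hr] := Bpp_bound hz; exists r => //.
  have := ler_norm z; lra.
- by move=> [r _ hyr]; exists (i r) => //; exact: Bpp_i.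
Qed.

End Hull.


Lemma cut_equiv_sym (K : realFieldType) (X Y : cut K) : cut_equiv X Y -> cut_equiv Y X.
Proof.
case=> [->|[B [hB [[h1 h2]|[h1 h2]]]]]; first by left.
- by right; exists B; split=> //; right.
- by right; exists B; split=> //; left.
Qed.

Lemma ball_emptyS (K : realFieldType) (S : set K) a b : (forall s, ~ S s) -> ball_at S a b -> b = a.
Proof. by move=> hS; rewrite /ball_at /= => -[//|h]; exfalso; exact: hS h. Qed.

Section Transfer.
Variables (R F : realFieldType) (i : {rmorphism R -> F}).
Variable iota : cut R -> cut F.
Hypothesis hcomp : forall C, restrict i (iota C) = cutD C.

Lemma LN_transfer (U : set (cut F)) (C : cut R) (L : cut F) :
  U (iota C) -> LNb U L ->
  (forall y, cutD L y -> exists2 d, cutD C d & y <= i d) ->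
  (forall C', cut_lt C' C -> cutD (iota C') `<=` cutD L) ->
  LNb (iota @^-1` U) C.
Proof.
move=> hUC [hL|[X1 [hX1 hL]]] ha hb.
- left=> C' hC'; case: (cut_le_eq_or_lt hC') => [->//|hlt].
  by apply: hL; exact: hb.
- have [y [hy hny]] := cut_ltE hX1; have [d hd hyd] := ha y hy.
  right; exists (cltc d); split.
  + apply: (cut_ltI (y := d)) => //=; last by rewrite /ltset /= ltxx.
    by move=> x; rewrite /ltset /= => hx; apply: cutP hd _; exact: ltW.
  + move=> C' hC1 hC'; case: (cut_le_eq_or_lt hC') => [->//|hlt].
    have hdC' : cutD C' d.
      have [x [hx hnx]] := cut_ltE hC1.
      have hdx : d <= x by rewrite leNgt; apply/negP.
      exact: cutP hx hdx.
    have hyC' : cutD (iota C') y.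
      have h : cutD (iota C') (i d) by apply/(compat_iff hcomp).
      exact: cutP h hyd.
    apply: hL; last exact: hb.
    case: (cut_total X1 (iota C')) => hs.
    * exact: (cut_ltI (y := y)).
    * by exfalso; apply: hny; exact: hs.
Qed.

Lemma RN_transfer (U : set (cut F)) (C : cut R) (Rc : cut F) :
  U (iota C) -> RNb U Rc ->
  (forall y, ~ cutD Rc y -> exists2 e, ~ cutD C e & i e <= y) ->
  (forall C', cut_lt C C' -> cutD Rc `<=` cutD (iota C')) ->
  RNb (iota @^-1` U) C.
Proof.
move=> hUC [hR|[X2 [hX2 hR]]] ha hb.
- left=> C' hC'; case: (cut_le_eq_or_lt hC') => [<-//|hlt].
  by apply: hR; exact: hb.
- have [y [hy hny]] := cut_ltE hX2; have [e he hey] := ha y hny.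
  right; exists (clec e); split.
  + apply: (cut_ltI (y := e)); last exact: he.
    * by move=> x hx; move: (cut_le_witness he hx); rewrite /ltset /leset /= => /ltW.
    * exact: lexx.
  + move=> C' hC2 hC'; case: (cut_le_eq_or_lt hC') => [<-//|hlt].
    have hne : ~ cutD C' e.
      move=> h; case: hC2 => hs hneq; apply: hneq; apply/seteqP; split=> // x hx.
      exact: cutP h hx.
    have hnye : ~ cutD (iota C') y.
      move=> h; apply: hne; apply/(compat_iff hcomp); exact: cutP h hey.
    apply: hR; last exact: hb.
    case: (cut_total (iota C') X2) => hs.
    * exact: (cut_ltI (y := y)).
    * by exfalso; apply: hnye; exact: hs.
Qed.

End Transfer.

Section Main.
Variables (R F : realFieldType) (i : {rmorphism R -> F}).
Hypothesis i_mono : {mono i : x y / x <= y}.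
Hypothesis vR_convex : forall (x : F) (a b : R), x != 0 -> a != 0 -> b != 0 ->
      vle (i a) x -> vle x (i b) -> exists2 r : R, r != 0 & veq (i r) x.

Lemma bc_low (B D E : set R) : (exists a, B a) -> ball_complement B D E -> D = lowD B.
Proof.
move=> [a ha] [hDB hBE hcov]; apply/seteqP; split=> x.
- by move=> hx b hb; exact: hDB.
- move=> hx; case: (hcov x) => [//|[hb|he]].
  + by have := hx x hb; rewrite ltxx.
  + by have := lt_trans (hx a ha) (hBE a x ha he); rewrite ltxx.
Qed.

Lemma bc_gt (B D E : set R) : (exists a, B a) -> ball_complement B D E -> E = gtD B.
Proof.
move=> [a ha] [hDB hBE hcov]; apply/seteqP; split=> x.
- by move=> hx b hb; exact: hBE.
- move=> hx; case: (hcov x) => [hd|[hb|//]].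
  + by have := lt_trans (hx a ha) (hDB x a hd ha); rewrite ltxx.
  + by have := hx x hb; rewrite ltxx.
Qed.

Lemma bc_exists (B : set R) : is_ball B -> ball_complement B (lowD B) (gtD B).
Proof.
move=> hB; split.
- by move=> d b hd hb; exact: hd.
- by move=> b e hb he; exact: he.
- move=> x; case: (pselect (lowD B x)) => hl; first by left.
  case: (pselect (gtD B x)) => hg; first by right; right.
  right; left; have [b1 hb1 hb1x] := notlowD hl.
  have [b2 [hb2 hnb2]] := exNP hg.
  apply: (isb_convex hB hb1 hb2) => //; by rewrite leNgt; apply/negP.
Qed.

Lemma gap_isball (C : cut R) y0 : ~ ball_cut C -> gap i C y0 -> is_ball (gap i C).
Proof.
move=> hnb hy0; rewrite (gap_ball i_mono hnb hy0).
exists [set x | x != 0 /\ forall r, ~ vle x (y0 - i r)], y0; split=> //.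
split; first by move=> x [].
move=> x y [hx0 hx] hy hxy; split=> // r hr; apply: (hx r); exact: vle_trans hxy hr.
Qed.

Lemma gap_equiv (C : cut R) : ~ ball_cut C -> cut_equiv (clo i (cutD C)) (chi i (~` cutD C)).
Proof.
move=> hnb; case: (pselect (exists g, gap i C g)) => [[g hg]|hne].
- right; exists (gap i C); split; first exact: gap_isball hg.
  left; split=> /=; [by rewrite (gap_lowD hg)|by rewrite (gap_upD hg)].
- left; apply: cut_eq => /=.
  exact: (gap_empty i_mono hne).
Qed.

Lemma isball_Bp (S : set R) a : vfinal S -> is_ball (Bp i S a).
Proof. by move=> hS; exists (Sp i S), (i a); split=> //; exact: vfinal_Sp. Qed.

Lemma isball_Bpp : is_ball (Bpp i).
Proof. by exists (Spp i), 0; split=> //; exact: vfinal_Spp. Qed.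

Lemma classify (C : cut R) : (~ ball_cut C) \/ (cutD C = set0) \/ (cutD C = setT) \/
  (exists S a, [/\ vfinal S, ball_at S a <> setT & cutD C = lowD (ball_at S a)]) \/
  (exists S a, [/\ vfinal S, ball_at S a <> setT & cutD C = upD (ball_at S a)]).
Proof.
case: (pselect (ball_cut C)) => [[B [hB hC]]|hnb]; last by left.
case: (pselect (B = setT)) => hT.
- by case: hC; rewrite hT ?upD_setT ?lowD_setT => h; [right; right; left|right; left].
- case: hB => S [a [hS eB]]; subst B.
  by case: hC => h; [right; right; right; right; exists S, a|right; right; right; left; exists S, a].
Qed.

Lemma restrict_lo (C : cut R) : [set r | ext_upD i (cutD C) (i r)] = cutD C.
Proof.
apply/seteqP; split=> r /=.
- by move=> [d hd]; rewrite i_mono => hrd; exact: cutP hd hrd.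
- by move=> hr; exists r.
Qed.

Lemma restrict_hi (C : cut R) : [set r | ext_lowD i (~` cutD C) (i r)] = cutD C.
Proof.
apply/seteqP; split=> r /=.
- move=> h; apply: contrapT => hr; by have := h r hr; rewrite ltxx.
- move=> hr e he; rewrite (i_lt i_mono) ltNge; apply/negP => h; apply: he; exact: cutP hr h.
Qed.

Section RL.
Variable iota : cut R -> cut F.
Hypothesis h1 : forall C : cut R, ~ ball_cut C ->
  cutD (iota C) = ext_upD i (cutD C) \/ cutD (iota C) = ext_lowD i (~` cutD C).
Hypothesis h2 : forall (B0 D E : set R) (C : cut R), is_ball B0 -> B0 <> setT ->
  ball_complement B0 D E -> cutD C = lowD B0 -> cutD (iota C) = ext_upD i D.
Hypothesis h3 : forall (B0 D E : set R) (C : cut R), is_ball B0 -> B0 <> setT ->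
  ball_complement B0 D E -> cutD C = upD B0 -> cutD (iota C) = ext_lowD i E.
Hypothesis h4 : forall C : cut R, cutD C = set0 -> cutD (iota C) = ext_lowD i setT.
Hypothesis h5 : forall C : cut R, cutD C = setT -> cutD (iota C) = ext_upD i setT.

Lemma iota_low (S : set R) a C : vfinal S -> ball_at S a <> setT ->
  cutD C = lowD (ball_at S a) -> cutD (iota C) = ext_upD i (lowD (ball_at S a)).
Proof.
move=> hS hT hC; have hB : is_ball (ball_at S a) by exists S, a.
exact: h2 hB hT (bc_exists hB) hC.
Qed.

Lemma iota_up (S : set R) a C : vfinal S -> ball_at S a <> setT ->
  cutD C = upD (ball_at S a) -> cutD (iota C) = ext_lowD i (gtD (ball_at S a)).
Proof.
move=> hS hT hC; have hB : is_ball (ball_at S a) by exists S, a.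
exact: h3 hB hT (bc_exists hB) hC.
Qed.

Lemma val C : cutD (iota C) = ext_upD i (cutD C) \/ cutD (iota C) = ext_lowD i (~` cutD C).
Proof.
case: (classify C) => [hnb|[h0|[hT|[[S [a [hS hne hC]]]|[S [a [hS hne hC]]]]]]].
- exact: h1.
- by right; rewrite (h4 h0) h0 setC0.
- by left; rewrite (h5 hT) hT.
- by left; rewrite (iota_low hS hne hC) hC.
- by right; rewrite (iota_up hS hne hC) hC compl_upD.
Qed.

Lemma compat C : restrict i (iota C) = cutD C.
Proof. rewrite /restrict; case: (val C) => ->; [exact: restrict_lo|exact: restrict_hi]. Qed.

Lemma inj_RL : injective iota.
Proof. move=> C1 C2 h; apply: cut_eq; by rewrite -(compat C1) -(compat C2) h. Qed.

Lemma edges (B : set R) C C' : is_ball B -> cutD C = lowD B -> cutD C' = upD B ->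
  cut_equiv (iota C) (iota C').
Proof.
move=> hB hC hC'; right.
case: (pselect (B = setT)) => hT.
- exists (Bpp i); split; first exact: isball_Bpp.
  left; split.
  + by rewrite (Bpp_low i_mono) h4 // hC hT lowD_setT.
  + by rewrite (Bpp_up i_mono) h5 // hC' hT upD_setT.
- case: hB => S [a [hS eB]]; subst B.
  exists (Bp i S a); split; first exact: isball_Bp.
  left; split.
  + by rewrite (Bp_low i_mono a hS) (iota_low hS hT hC).
  + by rewrite (Bp_up i_mono a hS) (iota_up hS hT hC').
Qed.

Lemma V_full (U : set (cut F)) : full U -> full (iota @^-1` U).
Proof.
move=> hU C1 C2 hC1 [<-|[B [hB [[k1 k2]|[k1 k2]]]]] //.
- exact: hU hC1 (edges hB k1 k2).
- exact: hU hC1 (cut_equiv_sym (edges hB k2 k1)).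
Qed.

Lemma cont_RL : full_continuous iota.
Proof.
move=> U [hUf hUo]; split; first exact: V_full.
move=> C hC; apply: LNRN_open => //.
- case: (pselect (cutD (iota C) = ext_upD i (cutD C))) => hlo.
    have [hL _] := open_LNRN hUo hC.
    apply: (LN_transfer compat hC hL).
    + by move=> y; rewrite hlo => -[d hd hyd]; exists d.
    + by move=> C' hlt; apply: (iota_mono compat); exact: cut_lt_sub hlt.
  case: (classify C) => [hnb|[h0|[hT|[[S [a [hS hne hCl]]]|[S [a [hS hne hCu]]]]]]].
  + have hUL : U (clo i (cutD C)).
      apply: hUf hC _; case: (h1 hnb) => h; first by [].
      have -> : iota C = chi i (~` cutD C) by apply: cut_eq.
      apply: cut_equiv_sym; exact: gap_equiv.
    have [hL _] := open_LNRN hUo hUL.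
    apply: (LN_transfer compat hC hL).
    * by move=> y [d hd hyd]; exists d.
    * by move=> C' hlt; exact: (F4 compat hlt).
  + left=> C' hC'; have -> : C' = C; last exact: hC.
    by apply: cut_eq; apply/seteqP; split=> //; rewrite h0.
  + by exfalso; apply: hlo; rewrite (h5 hT) hT.
  + by exfalso; apply: hlo; rewrite (iota_low hS hne hCl) hCl.
  + case: (pselect (exists s, S s)) => [[s0 hs0]|hSe].
    * exfalso; apply: hlo; have [c0 [hc0 hSc0]] := ball_not_setT hne.
      by rewrite (iota_up hS hne hCu) (convex_up i_mono a hS vR_convex hs0 hc0 hSc0) hCu.
    * have hSe' : forall s, ~ S s by move=> s hs; apply: hSe; exists s.
      have hB : is_ball (ball_at S a) by exists S, a.
      pose Cl := clow (ball_at S a).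
      have hUL : U (iota Cl).
        apply: hUf hC _; apply: cut_equiv_sym; exact: (edges (C := Cl) hB (erefl _) hCu).
      have [hL _] := open_LNRN hUo hUL.
      apply: (LN_transfer compat hC hL).
      -- move=> y; rewrite /Cl (iota_low (C := Cl) hS hne (erefl _)) => -[d hd hyd]; exists d => //.
         by rewrite hCu; exact: lowD_upD (ball_center _ _) _ hd.
      -- move=> C' hlt; apply: (iota_mono compat) => x hx /= b hb.
         rewrite (ball_emptyS hSe' hb); rewrite ltNge; apply/negP => hax.
         have haC' : cutD C' a by exact: cutP hx hax.
         have [w [hw hnw]] := cut_ltE hlt; move: hw; rewrite hCu => -[b' hb' hwb'].
         rewrite (ball_emptyS hSe' hb') in hwb'.
         by apply: hnw; exact: cutP haC' hwb'.
- case: (pselect (cutD (iota C) = ext_lowD i (~` cutD C))) => hhi.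
    have [_ hR] := open_LNRN hUo hC.
    apply: (RN_transfer compat hC hR).
    + move=> y; rewrite hhi => hny; have [e [he hne]] := exNP hny.
      by exists e => //; rewrite leNgt; apply/negP.
    + by move=> C' hlt; apply: (iota_mono compat); exact: cut_lt_sub hlt.
  case: (classify C) => [hnb|[h0|[hT|[[S [a [hS hne hCl]]]|[S [a [hS hne hCu]]]]]]].
  + have hUR : U (chi i (~` cutD C)).
      apply: hUf hC _; case: (h1 hnb) => h; last by [].
      have -> : iota C = clo i (cutD C) by apply: cut_eq.
      exact: gap_equiv.
    have [_ hR] := open_LNRN hUo hUR.
    apply: (RN_transfer compat hC hR).
    * move=> y hny; have [e [he hne]] := exNP hny.
      by exists e => //; rewrite leNgt; apply/negP.
    * by move=> C' hlt; exact: (F5 compat hlt).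
  + by exfalso; apply: hhi; rewrite (h4 h0) h0 setC0.
  + left=> C' hC'; have -> : C' = C; last exact: hC.
    by apply: cut_eq; apply/seteqP; split=> //; rewrite hT.
  + case: (pselect (exists s, S s)) => [[s0 hs0]|hSe].
    * exfalso; apply: hhi; have [c0 [hc0 hSc0]] := ball_not_setT hne.
      by rewrite (iota_low hS hne hCl) (convex_low i_mono a hS vR_convex hs0 hc0 hSc0) hCl.
    * have hSe' : forall s, ~ S s by move=> s hs; apply: hSe; exists s.
      have hB : is_ball (ball_at S a) by exists S, a.
      pose Cu := cup (ball_at S a).
      have hUR : U (iota Cu).
        apply: hUf hC _; exact: (edges (C' := Cu) hB hCl (erefl _)).
      have [_ hR] := open_LNRN hUo hUR.
      apply: (RN_transfer compat hC hR).
      -- move=> y; rewrite /Cu (iota_up (C := Cu) hS hne (erefl _)) => hny.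
         have [e [he hne']] := exNP hny; exists e; last by rewrite leNgt; apply/negP.
         rewrite hCl => hl; have := lt_trans (hl a (ball_center _ _)) (he a (ball_center _ _)).
         by rewrite ltxx.
      -- move=> C' hlt; apply: (iota_mono compat) => x /= [b hb hxb].
         have [w [hw hnw]] := cut_ltE hlt; move: hnw; rewrite hCl => hnw.
         have [b' hb' hb'w] := notlowD hnw.
         rewrite (ball_emptyS hSe' hb') in hb'w; rewrite (ball_emptyS hSe' hb) in hxb.
         exact: cutP (cutP hw hb'w) hxb.
  + by exfalso; apply: hhi; rewrite (iota_up hS hne hCu) hCu compl_upD.
Qed.

End RL.
End Main.


Section LR.
Variables (R F : realFieldType) (i : {rmorphism R -> F}).
Hypothesis i_mono : {mono i : x y / x <= y}.
Variable iota : cut R -> cut F.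
Hypothesis hcont : full_continuous iota.
Hypothesis hcomp : forall C, restrict i (iota C) = cutD C.

Lemma gtD_notup (A : set R) x : gtD A x -> ~ upD A x.
Proof. by move=> hx [b hb hxb]; have := hx b hb; rewrite ltNge hxb. Qed.

Lemma LR1 C : ~ ball_cut C ->
  cutD (iota C) = ext_upD i (cutD C) \/ cutD (iota C) = ext_lowD i (~` cutD C).
Proof.
move=> hnb; case: (pselect (cutD (iota C) = ext_upD i (cutD C))) => hlo; first by left.
case: (pselect (cutD (iota C) = ext_lowD i (~` cutD C))) => hhi; first by right.
exfalso.
have hlt1 : cut_lt (clo i (cutD C)) (iota C).
  by split; [move=> z hz; exact: (F3a hcomp hz)|move=> e; apply: hlo; rewrite -e].
have hlt2 : cut_lt (iota C) (chi i (~` cutD C)).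
  by split; [move=> z hz; exact: (F3b hcomp hz)|move=> e; apply: hhi; rewrite e].
have [y [hy hny]] := cut_ltE hlt1.
have hg : gap i C y.
  split.
  - move=> d hd; rewrite ltNge; apply/negP => h; apply: hny; by exists d.
  - move=> e he; have hh := F3b hcomp hy; exact: hh e he.
have hB := gap_isball i_mono hnb hg.
have e1 : clow (gap i C) = clo i (cutD C) by apply: cut_eq; exact: gap_lowD hg.
have e2 : cup (gap i C) = chi i (~` cutD C) by apply: cut_eq; exact: gap_upD hg.
have [_ hVo] := hcont (inside_full_open hB).
apply: hnb; apply: (open_single hVo) => [|C' hC'].
- by rewrite /preimage /= /inside e1 e2.
- move: hC'; rewrite /preimage /= /inside e1 e2 => -[k1 k2].
  case: (cut_trich C' C) => [hl|[//|hl]].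
  + exfalso; have [z [hz hnz]] := cut_ltE k1; exact: hnz (F4 hcomp hl hz).
  + exfalso; have [z [hz hnz]] := cut_ltE k2; exact: hnz (F5 hcomp hl hz).
Qed.

Lemma LR2 (B0 D E : set R) (C : cut R) : is_ball B0 -> B0 <> setT ->
  ball_complement B0 D E -> cutD C = lowD B0 -> cutD (iota C) = ext_upD i D.
Proof.
move=> hB hT hbc hC.
rewrite (bc_low (isb_nonempty hB) hbc).
case: hB hT hbc hC => S [a [hS eB]]; subst B0 => hT hbc hC.
have hBp : is_ball (Bp i S a) by exact: isball_Bp.
have hnia : ~ cutD (iota C) (i a).
  move=> h; have := (compat_iff hcomp C a).1 h; rewrite hC => h2.
  by have := h2 a (ball_center _ _); rewrite ltxx.
apply/seteqP; split; last by rewrite -hC; move=> z hz; exact: (F3a hcomp hz).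
move=> y hy; apply: contrapT => hny.
have hlt1 : cut_lt (clow (Bp i S a)) (iota C).
  apply: (cut_ltI (y := y)) => //=.
  - rewrite (Bp_low i_mono a hS) -hC; move=> z hz; exact: (F3a hcomp hz).
  - by rewrite (Bp_low i_mono a hS).
have hia : upD (Bp i S a) (i a) by exists (i a) => //; exact: ball_center.
have hlt2 : cut_lt (iota C) (cup (Bp i S a)).
  case: (cut_total (iota C) (cup (Bp i S a))) => hs.
  - case: (cut_le_eq_or_lt hs) => // heq; exfalso; apply: hnia; by rewrite heq.
  - by exfalso; apply: hnia; exact: hs.
have [_ hVo] := hcont (inside_full_open hBp).
have hVC : (iota @^-1` inside (Bp i S a)) C by split.
have [W [hW hWC hWV]] := hVo C hVC.
have hne : exists x, cutD C x by rewrite hC; exact: lowD_ne hS hT.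
have hnm : forall x, cutD C x -> exists2 x', cutD C x' & x < x'.
  move=> x; rewrite hC => hx. exact (lowD_nomax hS hx).
have [x [hx hWx]] := nb_below hW hWC hne hnm.
have [k1 k2] := hWV _ hWx.
have hxC : cut_lt (clec x) C.
  move: hx; rewrite hC => hx; have [x' hx' hxx'] := lowD_nomax hS hx.
  apply: (cut_ltI (y := x')); last by rewrite /= /leset /= leNgt hxx'.
  - by move=> z; rewrite /= /leset /= hC => hz; exact (lowD_dc hx hz).
  - by rewrite hC.
have [z [hz hnz]] := cut_ltE k1; apply: hnz.
by rewrite /= (Bp_low i_mono a hS) -hC; exact (F4 hcomp hxC hz).
Qed.

Lemma LR3 (B0 D E : set R) (C : cut R) : is_ball B0 -> B0 <> setT ->
  ball_complement B0 D E -> cutD C = upD B0 -> cutD (iota C) = ext_lowD i E.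
Proof.
move=> hB hT hbc hC.
rewrite (bc_gt (isb_nonempty hB) hbc).
case: hB hT hbc hC => S [a [hS eB]]; subst B0 => hT hbc hC.
have hBp : is_ball (Bp i S a) by exact: isball_Bp.
have hca : cutD C a by rewrite hC; exists a => //; exact: ball_center.
have hia : cutD (iota C) (i a) by apply/(compat_iff hcomp).
have hF3b : cutD (iota C) `<=` ext_lowD i (gtD (ball_at S a)).
  by rewrite -compl_upD -hC => z hz; exact: (F3b hcomp hz).
apply/seteqP; split=> // y hy; apply: contrapT => hny.
have hlt2 : cut_lt (iota C) (cup (Bp i S a)).
  apply: (cut_ltI (y := y)) => //=.
  - by rewrite (Bp_up i_mono a hS).
  - by rewrite (Bp_up i_mono a hS).
have hlt1 : cut_lt (clow (Bp i S a)) (iota C).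
  have hnl : ~ lowD (Bp i S a) (i a) by move=> h; have := h _ (ball_center _ _); rewrite ltxx.
  case: (cut_total (clow (Bp i S a)) (iota C)) => hs.
  - case: (cut_le_eq_or_lt hs) => // heq; by exfalso; apply: hnl; move: hia; rewrite -heq.
  - by exfalso; apply: hnl; exact: hs.
have [_ hVo] := hcont (inside_full_open hBp).
have hVC : (iota @^-1` inside (Bp i S a)) C by split.
have [W [hW hWC hWV]] := hVo C hVC.
have hne : exists e, ~ cutD C e.
  rewrite hC; have [x hx] := gtD_ne hS hT; exists x; exact: gtD_notup.
have hnm : forall e, ~ cutD C e -> exists2 e', ~ cutD C e' & e' < e.
  move=> e; rewrite hC => he; have [e' he' hlt] := gtD_nomin hS (notupD he).
  by exists e' => //; exact: gtD_notup.
have [e [he hWe]] := nb_above hW hWC hne hnm.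
have [k1 k2] := hWV _ hWe.
have heC : cut_lt C (clec e).
  apply: (cut_ltI (y := e)); last exact: he.
  - by move=> z hz; move: (cut_le_witness he hz); rewrite /ltset /leset /= => /ltW.
  - exact: lexx.
have [z [hz hnz]] := cut_ltE k2; apply: hnz; apply: (F5 hcomp heC).
by move: hz; rewrite /= (Bp_up i_mono a hS) -compl_upD -hC.
Qed.

Lemma LR4 C : cutD C = set0 -> cutD (iota C) = ext_lowD i setT.
Proof.
move=> hC; have hF := F3b hcomp (C := C); rewrite hC setC0 in hF.
apply/seteqP; split=> // y hy; apply: contrapT => hny.
have hlt : cut_lt (iota C) (clow (Bpp i)).
  apply: (cut_ltI (y := y)) => //=; rewrite (Bpp_low i_mono) //.
have [_ hVo] := hcont (outside_full_open (isball_Bpp i)).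
have hVC : (iota @^-1` outside (Bpp i)) C by left.
have [W [hW hWC hWV]] := hVo C hVC.
have [e [he hWe]] := nb_above hW hWC (ltac:(by rewrite hC; exists 0))
  (ltac:(by move=> e _; exists (e - 1); [rewrite hC|rewrite ltrBlDr ltrDl ltr01])).
have hie : cutD (iota (clec e)) (i e) by apply/(compat_iff hcomp); exact: lexx.
case: (hWV _ hWe) => k.
- have := cut_lt_sub k hie; rewrite /= (Bpp_low i_mono) => h.
  by have := h e I; rewrite ltxx.
- have [z [hz hnz]] := cut_ltE k; move: hnz; rewrite /= (Bpp_up i_mono) => hnz.
  have hz1 : i (e + 1) < z.
    by rewrite ltNge; apply/negP => h; apply: hnz; exists (e + 1).
  have : cutD (iota (clec e)) (i (e + 1)) by exact: cutP hz (ltW hz1).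
  move/(compat_iff hcomp); rewrite /= /leset /= => h.
  by have := h; rewrite -subr_le0 addrC addKr ler10.
Qed.

Lemma LR5 C : cutD C = setT -> cutD (iota C) = ext_upD i setT.
Proof.
move=> hC; have hF := F3a hcomp (C := C); rewrite hC in hF.
apply/seteqP; split=> // y hy; apply: contrapT => hny.
have hlt : cut_lt (cup (Bpp i)) (iota C).
  apply: (cut_ltI (y := y)) => //=; rewrite (Bpp_up i_mono) //.
have [_ hVo] := hcont (outside_full_open (isball_Bpp i)).
have hVC : (iota @^-1` outside (Bpp i)) C by right.
have [W [hW hWC hWV]] := hVo C hVC.
have [x [hx hWx]] := nb_below hW hWC (ltac:(by rewrite hC; exists 0))
  (ltac:(by move=> x _; exists (x + 1); [rewrite hC|rewrite ltrDl ltr01])).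
have hix : cutD (iota (clec x)) (i x) by apply/(compat_iff hcomp); exact: lexx.
case: (hWV _ hWx) => k.
- have := cut_lt_sub k hix; rewrite /= (Bpp_low i_mono) => h.
  by have := h x I; rewrite ltxx.
- have [z [hz hnz]] := cut_ltE k; move: hnz; rewrite /= (Bpp_up i_mono) => hnz.
  have hz1 : i (x + 1) < z.
    by rewrite ltNge; apply/negP => h; apply: hnz; exists (x + 1).
  have : cutD (iota (clec x)) (i (x + 1)) by exact: cutP hz (ltW hz1).
  move/(compat_iff hcomp); rewrite /= /leset /= => h.
  by have := h; rewrite -subr_le0 addrC addKr ler10.
Qed.

End LR.

Unset Implicit Arguments. Set Strict Implicit. Set Printing Implicit Defensive.

Theorem proposition4p8 (R F : realFieldType) (i : {rmorphism R -> F})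
  (i_mono : {mono i : x y / x <= y})
  (vR_convex : forall (x : F) (a b : R), x != 0 -> a != 0 -> b != 0 ->
      vle (i a) x -> vle x (i b) -> exists2 r : R, r != 0 & veq (i r) x)
  (iota : cut R -> cut F) :
  (injective iota /\ full_continuous iota /\
   (forall C, restrict i (iota C) = cutD C)) <->
  [/\ (forall C : cut R, ~ ball_cut C ->
         cutD (iota C) = ext_upD i (cutD C) \/
         cutD (iota C) = ext_lowD i (~` cutD C)),
      (forall (B0 D E : set R) (C : cut R), is_ball B0 -> B0 <> setT ->
         ball_complement B0 D E -> cutD C = lowD B0 ->
         cutD (iota C) = ext_upD i D),
      (forall (B0 D E : set R) (C : cut R), is_ball B0 -> B0 <> setT ->
         ball_complement B0 D E -> cutD C = upD B0 ->
         cutD (iota C) = ext_lowD i E),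
      (forall C : cut R, cutD C = set0 -> cutD (iota C) = ext_lowD i setT) &
      (forall C : cut R, cutD C = setT -> cutD (iota C) = ext_upD i setT)].
Proof.
split.
- move=> [hinj [hcont hcomp]]; split.
  + exact: (LR1 i_mono hcont hcomp).
  + exact: (LR2 i_mono hcont hcomp).
  + exact: (LR3 i_mono hcont hcomp).
  + exact: (LR4 i_mono hcont hcomp).
  + exact: (LR5 i_mono hcont hcomp).
- move=> [h1 h2 h3 h4 h5]; split; first exact: (inj_RL i_mono h1 h2 h3 h4 h5).
  split; first exact: (cont_RL i_mono vR_convex h1 h2 h3 h4 h5).
  exact: (compat i_mono h1 h2 h3 h4 h5).
Qed.
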